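(* Let $(s_n)_{n\ge1}$ be a sequence of integers with $s_n\ge4$ for all $n$ and $s_n\to\infty$. Put \[ s_0=\liminf_{n\to\infty}\frac{\log(s_1\cdots s_n)}{2\log(s_1\cdots s_n)+\log s_{n+1}}. \] Then for every integer $N\ge2$, \[ \dim_H\{x\in(0,1]:\ \forall n\in\mathbb N,\ s_n\le a_n(x)\le Ns_n-1\}=s_0. \]
   Context: Lüroth digits: for $x\in(0,1]$, $a_1(x)=[1/x]+1$, $\mathcal L(x)=[1/x]([1/x]+1)x-[1/x]$ ($[t]$ = integer part), $a_{n+1}(x)=a_1(\mathcal L^n(x))$, so that $x=\frac1{a_1}+\sum_{n\ge2}\frac{1}{a_1(a_1-1)\cdots a_{n-1}(a_{n-1}-1)a_n}$. *)

(* Defs.v *)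
From Stdlib Require Import Reals.
From Coquelicot Require Import Coquelicot.
Open Scope R_scope.

Definition lfloor_inv (x : R) : Z := Int_part (/ x).

Definition luroth_a1 (x : R) : nat := (Z.to_nat (lfloor_inv x) + 1)%nat.

Definition luroth_map (x : R) : R :=
  let k := IZR (lfloor_inv x) in k * (k + 1) * x - k.

Definition luroth_digit (n : nat) (x : R) : nat :=
  luroth_a1 (Nat.iter (n - 1) luroth_map x).

(* diameter, as an extended real (m_infty for the empty set) *)
Definition diam (U : R -> Prop) : Rbar :=
  Rbar_lub (fun r => exists x y, U x /\ U y /\ r = Finite (Rabs (x - y))).

(* d^t with the convention 0^t = 0 (only used for t > 0) *)
Definition powt (d t : R) : R := if Rle_dec d 0 then 0 else Rpower d t.

Definition Rbar_series (f : nat -> R) : Rbar :=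
  Rbar_lub (fun v => exists n, v = Finite (sum_f_R0 f n)).

Definition hausdorff_content (t delta : R) (E : R -> Prop) : Rbar :=
  Rbar_glb (fun v => exists U : nat -> (R -> Prop),
    (forall x, E x -> exists i, U i x) /\
    (forall i, Rbar_le (diam (U i)) (Finite delta)) /\
    v = Rbar_series (fun i => powt (real (diam (U i))) t)).

Definition hausdorff_measure (t : R) (E : R -> Prop) : Rbar :=
  Rbar_lub (fun v => exists delta, 0 < delta /\ v = hausdorff_content t delta E).

Definition hausdorff_dim (E : R -> Prop) : Rbar :=
  Rbar_glb (fun v => exists t, 0 < t /\ hausdorff_measure t E = Finite 0 /\ v = Finite t).

Fixpoint prod_s (s : nat -> nat) (n : nat) : R :=
  match n with
  | O => 1
  | S m => prod_s s m * INR (s (S m))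
  end.

Definition s0_term (s : nat -> nat) (n : nat) : R :=
  ln (prod_s s n) / (2 * ln (prod_s s n) + ln (INR (s (S n)))).

(* Main.v *)
Require Import Defs.
From Stdlib Require Import Reals Lra Lia Psatz ZArith Classical ClassicalEpsilon List.
From Coquelicot Require Import Coquelicot.
Open Scope R_scope.

Lemma Int_part_unique (r : R) (z : Z) : IZR z <= r < IZR z + 1 -> Int_part r = z.
Proof.
  intros [H1 H2]. unfold Int_part.
  assert (z + 1 = up r)%Z.
  { apply tech_up; rewrite plus_IZR; simpl; lra. }
  lia.
Qed.

Lemma INR_to_nat (z : Z) : (0 <= z)%Z -> INR (Z.to_nat z) = IZR z.
Proof. intros H. rewrite INR_IZR_INZ, Z2Nat.id; auto. Qed.

Definition Lit (n : nat) (x : R) : R := Nat.iter n luroth_map x.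

Lemma digit_S n x : luroth_digit (S n) x = luroth_a1 (Lit n x).
Proof. unfold luroth_digit, Lit. replace (S n - 1)%nat with n by lia. reflexivity. Qed.

Lemma Lit_S n x : Lit (S n) x = luroth_map (Lit n x).
Proof. reflexivity. Qed.

Lemma a1_spec (x : R) : 0 < x <= 1 ->
  (2 <= luroth_a1 x)%nat /\
  / INR (luroth_a1 x) < x <= / (INR (luroth_a1 x) - 1) /\
  luroth_map x = INR (luroth_a1 x) * (INR (luroth_a1 x) - 1) * x - (INR (luroth_a1 x) - 1).
Proof.
  intros [Hx0 Hx1].
  unfold luroth_a1, luroth_map, lfloor_inv.
  set (k := Int_part (/ x)).
  destruct (base_Int_part (/ x)) as [B1 B2]. fold k in B1, B2.
  assert (Hix : 1 <= / x).
  { replace 1 with (/ 1) by field. apply Rinv_le_contravar; lra. }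
  assert (Hk : (1 <= k)%Z).
  { assert (0 < IZR k) by lra. apply lt_0_IZR in H. lia. }
  assert (HI : INR (Z.to_nat k + 1) = IZR k + 1).
  { rewrite plus_INR, INR_to_nat by lia. simpl. lra. }
  rewrite HI.
  assert (Hk1 : 1 <= IZR k) by (apply IZR_le; lia).
  split; [lia|]. split; [split|].
  - apply (Rmult_lt_reg_l (IZR k + 1)); [lra|].
    rewrite Rinv_r by lra.
    apply (Rmult_lt_reg_l (/ x)). apply Rinv_0_lt_compat; lra.
    rewrite Rmult_1_r. replace (/ x * ((IZR k + 1) * x)) with (IZR k + 1) by (field; lra). lra.
  - replace (IZR k + 1 - 1) with (IZR k) by ring.
    apply (Rmult_le_reg_l (IZR k)); [lra|].
    rewrite Rinv_r by lra.
    apply (Rmult_le_reg_l (/ x)). apply Rinv_0_lt_compat; lra.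
    replace (/ x * (IZR k * x)) with (IZR k) by (field; lra). lra.
  - ring.
Qed.

Lemma a1_char (x : R) (a : nat) : (2 <= a)%nat ->
  / INR a < x <= / (INR a - 1) -> luroth_a1 x = a.
Proof.
  intros Ha [H1 H2].
  assert (HA : 2 <= INR a) by (replace 2 with (INR 2) by (simpl; lra); apply le_INR; auto).
  assert (Hx0 : 0 < x). { apply Rlt_trans with (/ INR a); auto. apply Rinv_0_lt_compat; lra. }
  unfold luroth_a1, lfloor_inv.
  assert (Int_part (/ x) = Z.of_nat a - 1)%Z.
  { apply Int_part_unique. rewrite minus_IZR, <- INR_IZR_INZ. simpl. split.
    - replace (/ x) with (/ x * 1) by ring.
      apply (Rmult_le_reg_l x); auto.
      replace (x * (/ x * 1)) with 1 by (field; lra).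
      apply (Rmult_le_reg_r (/ (INR a - 1))). apply Rinv_0_lt_compat; lra.
      replace (x * (INR a - 1) * / (INR a - 1)) with x by (field; lra). lra.
    - replace (INR a - 1 + 1) with (INR a) by ring.
      apply (Rmult_lt_reg_l x); auto.
      replace (x * / x) with 1 by (field; lra).
      apply (Rmult_lt_reg_r (/ INR a)). apply Rinv_0_lt_compat; lra.
      replace (x * INR a * / INR a) with x by (field; lra). lra. }
  rewrite H. lia.
Qed.

Lemma L_range (x : R) : 0 < x <= 1 -> 0 < luroth_map x <= 1.
Proof.
  intros Hx. destruct (a1_spec x Hx) as [Ha [[H1 H2] H3]]. rewrite H3.
  set (a := INR (luroth_a1 x)) in *.
  assert (HA : 2 <= a) by (unfold a; replace 2 with (INR 2) by (simpl; lra); apply le_INR; auto).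
  split.
  - apply (Rmult_lt_compat_l a) in H1; [|lra]. rewrite Rinv_r in H1 by lra.
    assert (0 < (a - 1) * (a * x - 1)) by (apply Rmult_lt_0_compat; lra). nra.
  - apply (Rmult_le_compat_l (a - 1)) in H2; [|lra]. rewrite Rinv_r in H2 by lra.
    assert (0 <= a * (1 - (a-1) * x)) by (apply Rmult_le_pos; lra). nra.
Qed.

Lemma Lit_range n x : 0 < x <= 1 -> 0 < Lit n x <= 1.
Proof. intros H; induction n; simpl; auto. apply L_range; auto. Qed.
Definition q (a : nat) : R := INR a * (INR a - 1).

Fixpoint Bd (x : R) (n : nat) : R :=
  match n with O => 1 | S m => Bd x m / q (luroth_a1 (Lit m x)) end.

Definition agree (n : nat) (x y : R) : Prop :=
  forall k, (k < n)%nat -> luroth_a1 (Lit k x) = luroth_a1 (Lit k y).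

Lemma INR_ge2 a : (2 <= a)%nat -> 2 <= INR a.
Proof. intros; replace 2 with (INR 2) by (simpl; lra); apply le_INR; auto. Qed.

Lemma q_pos a : (2 <= a)%nat -> 0 < q a.
Proof. intros H; apply INR_ge2 in H; unfold q; nra. Qed.

Lemma Bd_pos x n : 0 < x <= 1 -> 0 < Bd x n.
Proof.
  intros H; induction n; simpl; [lra|].
  destruct (a1_spec _ (Lit_range n x H)) as [Ha _].
  apply Rdiv_lt_0_compat; auto. apply q_pos; auto.
Qed.

Lemma L_diff x y : 0 < x <= 1 -> 0 < y <= 1 -> luroth_a1 x = luroth_a1 y ->
  luroth_map x - luroth_map y = q (luroth_a1 x) * (x - y).
Proof.
  intros Hx Hy He. destruct (a1_spec x Hx) as [_ [_ Ex]]. destruct (a1_spec y Hy) as [_ [_ Ey]].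
  rewrite Ex, Ey, He. unfold q. ring.
Qed.

Lemma shared n x y : 0 < x <= 1 -> 0 < y <= 1 -> agree n x y ->
  x - y = Bd x n * (Lit n x - Lit n y).
Proof.
  intros Hx Hy. induction n; intros Ha.
  - simpl. unfold Lit; simpl. ring.
  - assert (Ha' : agree n x y) by (intros k Hk; apply Ha; lia).
    rewrite (IHn Ha'). simpl Bd. rewrite !Lit_S.
    rewrite L_diff; [| apply Lit_range; auto | apply Lit_range; auto | apply Ha; lia].
    destruct (a1_spec _ (Lit_range n x Hx)) as [Hq _].
    assert (0 < q (luroth_a1 (Lit n x))) by (apply q_pos; auto).
    field. lra.
Qed.

Definition Ein (s : nat -> nat) (N : nat) (x : R) : Prop :=
  0 < x <= 1 /\ forall n, (1 <= n)%nat ->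
    (s n <= luroth_digit n x)%nat /\ (luroth_digit n x <= N * s n - 1)%nat.

Lemma Ein_dig s N x k : Ein s N x ->
  (s (S k) <= luroth_a1 (Lit k x))%nat /\ (luroth_a1 (Lit k x) <= N * s (S k) - 1)%nat.
Proof. intros [_ H]. rewrite <- digit_S. apply H. lia. Qed.

Lemma Rnat_bounds (s : nat -> nat) (N a k : nat) : (4 <= s k)%nat -> (2 <= N)%nat ->
  (s k <= a)%nat -> (a <= N * s k - 1)%nat ->
  4 <= INR (s k) /\ INR (s k) <= INR a /\ INR a <= INR N * INR (s k) - 1 /\ 2 <= INR N.
Proof.
  intros H4 HN H1 H2.
  assert (4 <= INR (s k)) by (replace 4 with (INR 4) by (simpl; lra); apply le_INR; auto).
  repeat split; auto.
  - apply le_INR; auto.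
  - assert (INR a <= INR (N * s k - 1)) by (apply le_INR; auto).
    rewrite minus_INR, mult_INR in H0 by nia. simpl in H0. lra.
  - apply INR_ge2; auto.
Qed.
Lemma prod_s_pos s n : (forall k, (1 <= k)%nat -> (4 <= s k)%nat) -> 1 <= prod_s s n.
Proof.
  intros H4; induction n; simpl; [lra|].
  assert (4 <= INR (s (S n))) by (replace 4 with (INR 4) by (simpl; lra); apply le_INR; apply H4; lia).
  nra.
Qed.

Lemma Bd_bounds s N x n : (forall k, (1 <= k)%nat -> (4 <= s k)%nat) -> (2 <= N)%nat ->
  Ein s N x ->
  Bd x n * (prod_s s n)^2 <= (4/3)^n /\ 1 <= Bd x n * (INR N ^ n * prod_s s n)^2.
Proof.
  intros H4 HN HE. induction n; simpl; [lra|].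
  destruct IHn as [I1 I2].
  destruct (Ein_dig _ _ _ n HE) as [D1 D2].
  destruct (Rnat_bounds s N _ (S n) (H4 (S n) ltac:(lia)) HN D1 D2) as [S4 [Sa [aN N2]]].
  set (a := INR (luroth_a1 (Lit n x))) in *. set (sv := INR (s (S n))) in *.
  assert (Hq : q (luroth_a1 (Lit n x)) = a * (a - 1)) by reflexivity.
  rewrite Hq. set (B := Bd x n) in *. set (P := prod_s s n) in *.
  assert (HB : 0 < B) by (apply Bd_pos; apply HE).
  assert (HP : 1 <= P) by (apply prod_s_pos; auto).
  assert (Hqa : 0 < a * (a - 1)) by nra.
  split.
  - replace (B / (a * (a - 1)) * ((P * sv) * ((P * sv) * 1))) with (B * P^2 * (sv*sv / (a*(a-1)))) by (field; lra).
    replace (4/3 * (4/3)^n) with ((4/3)^n * (4/3)) by ring.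
    apply Rmult_le_compat; [nra | | lra |].
    + apply Rmult_le_pos; [nra|]. apply Rlt_le, Rinv_0_lt_compat; auto.
    + apply (Rmult_le_reg_r (a*(a-1))); auto. unfold Rdiv. rewrite Rmult_assoc, Rinv_l by lra.
      assert (a * (a-1) >= sv * (sv - 1)) by nra. nra.
  - set (Nn := INR N ^ n) in *.
    replace (B / (a * (a - 1)) * ((INR N * Nn) * (P * sv) * ((INR N * Nn) * (P * sv) * 1)))
      with (B * (Nn * P)^2 * ((INR N * sv)^2 / (a*(a-1)))) by (field; lra).
    apply Rle_trans with (1 * 1); [lra|].
    apply Rmult_le_compat; [lra | lra | lra |].
    apply (Rmult_le_reg_r (a*(a-1))); auto. unfold Rdiv. rewrite Rmult_assoc, Rinv_l by lra.
    assert (a * (a-1) <= (INR N * sv)^2) by nra. nra.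
Qed.
Lemma sep X Y : 0 < X <= 1 -> 0 < Y <= 1 -> (luroth_a1 Y < luroth_a1 X)%nat ->
  luroth_map X <= 1/3 ->
  2 / (3 * q (luroth_a1 X)) <= Y - X /\
  (INR (luroth_a1 X) - 1 - INR (luroth_a1 Y)) / (INR (luroth_a1 Y) * (INR (luroth_a1 X) - 1)) <= Y - X.
Proof.
  intros HX HY Hlt HL.
  destruct (a1_spec X HX) as [Ha [[X1 X2] X3]]. destruct (a1_spec Y HY) as [Hb [[Y1 Y2] Y3]].
  unfold q. set (a := INR (luroth_a1 X)) in *. set (b := INR (luroth_a1 Y)) in *.
  assert (Hab : b <= a - 1).
  { unfold a, b. assert (INR (S (luroth_a1 Y)) <= INR (luroth_a1 X)) by (apply le_INR; lia).
    rewrite S_INR in H. lra. }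
  assert (HA : 2 <= a) by (apply INR_ge2; auto). assert (HB : 2 <= b) by (apply INR_ge2; auto).
  assert (Xup : X <= (1/3 + (a - 1)) / (a * (a - 1))).
  { apply (Rmult_le_reg_r (a*(a-1))); [nra|]. unfold Rdiv. rewrite Rmult_assoc, Rinv_l by nra. nra. }
  assert (Ylo : / (a - 1) <= / b) by (apply Rinv_le_contravar; lra).
  split.
  - assert (E1 : / (a - 1) - (1/3 + (a - 1)) / (a * (a - 1)) = 2 / (3 * (a * (a - 1)))) by (field; lra).
    lra.
  - assert (E2 : (a - 1 - b) / (b * (a - 1)) = / b - / (a - 1)) by (field; lra).
    lra.
Qed.

Lemma Lit_small s N x n : (forall k, (1 <= k)%nat -> (4 <= s k)%nat) -> Ein s N x ->
  Lit (S n) x <= 1/3.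
Proof.
  intros H4 HE.
  destruct (a1_spec _ (Lit_range (S n) x (proj1 HE))) as [_ [[_ H2] _]].
  destruct (Ein_dig _ _ _ (S n) HE) as [D1 _].
  assert (4 <= INR (luroth_a1 (Lit (S n) x))).
  { replace 4 with (INR 4) by (simpl; lra). apply le_INR. specialize (H4 (S (S n)) ltac:(lia)). lia. }
  apply Rle_trans with (1 := H2).
  replace (1/3) with (/ (4 - 1)) by field. apply Rinv_le_contravar; lra.
Qed.

Lemma gap_count s N x y n : (forall k, (1 <= k)%nat -> (4 <= s k)%nat) -> (2 <= N)%nat ->
  Ein s N x -> Ein s N y -> agree n x y ->
  (luroth_a1 (Lit n x) <> luroth_a1 (Lit n y) ->
     2/3 * Bd x n / (INR N * INR (s (S n)))^2 <= Rabs (x - y)) /\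
  Rabs (INR (luroth_a1 (Lit n x)) - INR (luroth_a1 (Lit n y))) <=
     1 + (INR N * INR (s (S n)))^2 * Rabs (x - y) / Bd x n.
Proof.
  intros H4 HN HEx HEy Hag.
  pose proof (shared n x y (proj1 HEx) (proj1 HEy) Hag) as Hsh.
  assert (HB : 0 < Bd x n) by (apply Bd_pos, HEx).
  pose proof (Lit_range n x (proj1 HEx)) as RX. pose proof (Lit_range n y (proj1 HEy)) as RY.
  pose proof (Lit_small s N x n H4 HEx) as SX. pose proof (Lit_small s N y n H4 HEy) as SY.
  rewrite Lit_S in SX, SY.
  destruct (Ein_dig _ _ _ n HEx) as [Dx1 Dx2]. destruct (Ein_dig _ _ _ n HEy) as [Dy1 Dy2].
  destruct (Rnat_bounds s N _ (S n) (H4 (S n) ltac:(lia)) HN Dx1 Dx2) as [S4 [Sa [aN N2]]].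
  destruct (Rnat_bounds s N _ (S n) (H4 (S n) ltac:(lia)) HN Dy1 Dy2) as [_ [Sb [bN _]]].
  set (X := Lit n x) in *. set (Y := Lit n y) in *.
  set (a := INR (luroth_a1 X)) in *. set (b := INR (luroth_a1 Y)) in *.
  set (sv := INR (s (S n))) in *. set (B := Bd x n) in *.
  assert (Habs : Rabs (x - y) = B * Rabs (X - Y)).
  { rewrite Hsh, Rabs_mult, Rabs_pos_eq by lra. reflexivity. }
  assert (HNs : 0 < (INR N * sv)^2) by nra.
  assert (Hd : Rabs (X - Y) = Rabs (x - y) / B) by (rewrite Habs; field; lra).
  destruct (lt_eq_lt_dec (luroth_a1 Y) (luroth_a1 X)) as [[Hlt|Heq]|Hgt].
  - destruct (sep X Y RX RY Hlt SX) as [G1 G2]. fold a b in G1, G2.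
    assert (b + 1 <= a).
    { unfold a, b. rewrite <- S_INR. apply le_INR; lia. }
    assert (Hq : q (luroth_a1 X) <= (INR N * sv)^2) by (unfold q; fold a; nra).
    assert (HqP : 0 < q (luroth_a1 X)) by (unfold q; fold a; nra).
    assert (0 < 2 / (3 * q (luroth_a1 X))) by (apply Rdiv_lt_0_compat; lra).
    rewrite Rabs_minus_sym with (x := X) in Hd. rewrite Rabs_pos_eq in Hd by lra.
    split.
    + intros _. rewrite Habs, Rabs_minus_sym, Rabs_pos_eq by lra.
      replace (2/3 * B / (INR N * sv)^2) with (B * (2 / (3 * (INR N * sv)^2))) by (field; lra).
      apply Rmult_le_compat_l; [lra|]. apply Rle_trans with (2 / (3 * q (luroth_a1 X))); [|lra].
      unfold Rdiv; apply Rmult_le_compat_l; [lra|]; apply Rinv_le_contravar; lra.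
    + rewrite Rabs_pos_eq by lra.
      replace ((INR N * sv)^2 * Rabs (x - y) / B) with ((INR N*sv)^2 * (Y - X)) by (rewrite Hd; field; lra).
      assert (b * (a - 1) <= (INR N * sv)^2) by nra.
      assert (0 < b * (a - 1)) by nra.
      assert (a - 1 - b <= b * (a - 1) * (Y - X)).
      { apply Rmult_le_compat_l with (r := b * (a-1)) in G2; [|lra].
        replace (b * (a - 1) * ((a - 1 - b) / (b * (a - 1)))) with (a - 1 - b) in G2 by (field; lra). lra. }
      assert (b * (a-1) * (Y - X) <= (INR N * sv)^2 * (Y - X)) by (apply Rmult_le_compat_r; lra).
      lra.
  - split; [intros C; exfalso; apply C; auto|].
    unfold a, b. rewrite Heq. rewrite Rminus_diag, Rabs_R0.
    assert (0 <= (INR N * sv)^2 * Rabs (x - y) / B).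
    { apply Rdiv_le_0_compat; [apply Rmult_le_pos; [lra| apply Rabs_pos]|lra]. }
    lra.
  - destruct (sep Y X RY RX Hgt SY) as [G1 G2]. fold a b in G1, G2.
    assert (a + 1 <= b).
    { unfold a, b. rewrite <- S_INR. apply le_INR; lia. }
    assert (Hq : q (luroth_a1 Y) <= (INR N * sv)^2) by (unfold q; fold b; nra).
    assert (HqP : 0 < q (luroth_a1 Y)) by (unfold q; fold b; nra).
    assert (0 < 2 / (3 * q (luroth_a1 Y))) by (apply Rdiv_lt_0_compat; lra).
    rewrite Rabs_pos_eq in Hd by lra.
    split.
    + intros _. rewrite Habs, Rabs_pos_eq by lra.
      replace (2/3 * B / (INR N * sv)^2) with (B * (2 / (3 * (INR N * sv)^2))) by (field; lra).
      apply Rmult_le_compat_l; [lra|]. apply Rle_trans with (2 / (3 * q (luroth_a1 Y))); [|lra].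
      unfold Rdiv; apply Rmult_le_compat_l; [lra|]; apply Rinv_le_contravar; lra.
    + rewrite Rabs_minus_sym, Rabs_pos_eq by lra.
      replace ((INR N * sv)^2 * Rabs (x - y) / B) with ((INR N*sv)^2 * (X - Y)) by (rewrite Hd; field; lra).
      assert (a * (b - 1) <= (INR N * sv)^2) by nra.
      assert (0 < a * (b - 1)) by nra.
      assert (b - 1 - a <= a * (b - 1) * (X - Y)).
      { apply Rmult_le_compat_l with (r := a * (b-1)) in G2; [|lra].
        replace (a * (b - 1) * ((b - 1 - a) / (a * (b - 1)))) with (b - 1 - a) in G2 by (field; lra). lra. }
      assert (a * (b-1) * (X - Y) <= (INR N * sv)^2 * (X - Y)) by (apply Rmult_le_compat_r; lra).
      lra.
Qed.
Lemma Series_zero : Series (fun _ : nat => 0) = 0.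
Proof.
  rewrite (Series_ext _ (fun n => 0 * (fun _ => 0) n)) by (intros; simpl; ring).
  rewrite (Series_scal_l 0 (fun _ => 0)). ring.
Qed.

Lemma Series_nonneg (b : nat -> R) : (forall n, 0 <= b n) -> ex_series b -> 0 <= Series b.
Proof.
  intros H He. rewrite <- Series_zero. apply Series_le; auto. intros; split; [lra| apply H].
Qed.


Fixpoint pinv (qd : nat -> R) (j n : nat) : R :=
  match j with O => 1 | S j' => pinv qd j' (S n) / qd (S n) end.

Lemma pinv_bound qd : (forall k, (1 <= k)%nat -> 12 <= qd k) ->
  forall j n, 0 < pinv qd j n <= (1/12)^j.
Proof.
  intros Hq j. induction j; intros n; simpl; [lra|].
  destruct (IHj (S n)) as [A B]. specialize (Hq (S n) ltac:(lia)).
  split. apply Rdiv_lt_0_compat; lra.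
  apply Rle_trans with ((1/12)^j * /12); [| right; field].
  unfold Rdiv at 1. apply Rmult_le_compat; [lra| apply Rlt_le, Rinv_0_lt_compat; lra | lra | apply Rinv_le_contravar; lra].
Qed.

Lemma realize (d : nat -> nat) : (forall k, (1 <= k)%nat -> (4 <= d k)%nat) ->
  exists x, 0 < x <= 1 /\ forall k, luroth_a1 (Lit k x) = d (S k).
Proof.
  intros Hd.
  set (qd := fun k => q (d k)).
  assert (Hd4 : forall k, (1 <= k)%nat -> 4 <= INR (d k)).
  { intros k Hk. replace 4 with (INR 4) by (simpl; lra). apply le_INR. apply Hd; auto. }
  assert (Hq : forall k, (1 <= k)%nat -> 12 <= qd k).
  { intros k Hk. unfold qd, q. specialize (Hd4 k Hk). nra. }
  set (T := fun n j => / INR (d (S (n + j))) * pinv qd j n).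
  assert (HT : forall n j, 0 <= T n j <= / 4 * (1/12)^j).
  { intros n j. unfold T. destruct (pinv_bound qd Hq j n) as [A B].
    specialize (Hd4 (S (n + j)) ltac:(lia)).
    split. apply Rmult_le_pos; [apply Rlt_le, Rinv_0_lt_compat; lra| lra].
    apply Rmult_le_compat; [apply Rlt_le, Rinv_0_lt_compat; lra | lra | apply Rinv_le_contravar; lra | lra]. }
  assert (Hgeo : ex_series (fun j => / 4 * (1/12)^j)).
  { apply (@ex_series_scal_l R_AbsRing R_NormedModule (/4) (fun j => (1/12)^j)).
    apply ex_series_geom. rewrite Rabs_pos_eq; lra. }
  assert (Hex : forall n, ex_series (T n)).
  { intros n. apply (@ex_series_le R_AbsRing R_CompleteNormedModule (T n) (fun j => / 4 * (1/12)^j)); auto. intros j. change (norm (T n j)) with (Rabs (T n j)).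
    rewrite Rabs_pos_eq by apply HT. apply HT. }
  set (z := fun n => Series (T n)).
  assert (Hz0 : forall n, 0 <= z n) by (intros; apply Series_nonneg; [apply HT| apply Hex]).
  assert (Hzu : forall n, z n <= 3/11).
  { intros n. unfold z. apply Rle_trans with (Series (fun j => / 4 * (1/12)^j)).
    apply Series_le; auto. rewrite (Series_scal_l (/4) (fun j => (1/12)^j)).
    rewrite Series_geom by (rewrite Rabs_pos_eq; lra). lra. }
  assert (Hrec : forall n, z n = / INR (d (S n)) + z (S n) / qd (S n)).
  { intros n. unfold z. rewrite Series_incr_1 by apply Hex.
    f_equal. unfold T. simpl. rewrite Nat.add_0_r. ring.
    unfold Rdiv. rewrite <- Series_scal_r. apply Series_ext. intros j. unfold T. simpl.
    replace (n + S j)%nat with (S n + j)%nat by lia. simpl. unfold Rdiv. rewrite Rmult_assoc. reflexivity. }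
  assert (Hpos : forall n, 0 < z n).
  { intros n. rewrite Hrec. specialize (Hd4 (S n) ltac:(lia)). specialize (Hq (S n) ltac:(lia)).
    assert (0 < / INR (d (S n))) by (apply Rinv_0_lt_compat; lra).
    assert (0 <= z (S n) / qd (S n)) by (apply Rdiv_le_0_compat; [apply Hz0| lra]). lra. }
  assert (Hstep : forall n, luroth_a1 (z n) = d (S n) /\ luroth_map (z n) = z (S n)).
  { intros n. specialize (Hd4 (S n) ltac:(lia)).
    pose proof (Hpos (S n)) as P1. pose proof (Hzu (S n)) as P2.
    assert (Hchar : / INR (d (S n)) < z n <= / (INR (d (S n)) - 1)).
    { rewrite Hrec. unfold qd, q. set (a := INR (d (S n))) in *. set (w := z (S n)) in *.
      split.
      - assert (0 < w / (a * (a - 1))) by (apply Rdiv_lt_0_compat; nra). lra.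
      - assert (/ (a - 1) = / a + 1 / (a * (a - 1))) by (field; lra).
        assert (w / (a * (a-1)) <= 1 / (a * (a-1))).
        { unfold Rdiv. apply Rmult_le_compat_r; [apply Rlt_le, Rinv_0_lt_compat; nra| lra]. }
        lra. }
    assert (He : luroth_a1 (z n) = d (S n)).
    { apply a1_char; auto. specialize (Hd (S n) ltac:(lia)). lia. }
    split; auto.
    assert (Hzr : 0 < z n <= 1) by (split; [apply Hpos| pose proof (Hzu n); lra]).
    destruct (a1_spec _ Hzr) as [_ [_ E3]]. rewrite E3, He.
    rewrite (Hrec n). unfold qd, q. field. lra. }
  exists (z O). split. split; [apply Hpos| pose proof (Hzu O); lra].
  assert (HL : forall k, Lit k (z O) = z k).
  { induction k; [reflexivity|]. rewrite Lit_S, IHk. apply Hstep. }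
  intros k. rewrite HL. apply Hstep.
Qed.
Definition nfloor (r : R) : nat := Z.to_nat (Int_part r).

Lemma nfloor_spec r : 0 <= r -> INR (nfloor r) <= r < INR (nfloor r) + 1.
Proof.
  intros H. unfold nfloor. destruct (base_Int_part r) as [B1 B2].
  assert (0 <= Int_part r)%Z.
  { assert (-1 < IZR (Int_part r)) by lra. apply lt_IZR in H0. lia. }
  rewrite INR_to_nat by auto. lra.
Qed.

Definition mR (s : nat -> nat) (N k : nat) : R := INR ((N - 1) * s k).

Fixpoint mu (s : nat -> nat) (N k : nat) : R :=
  match k with O => 1 | S k' => mu s N k' / mR s N (S k') end.

Fixpoint rem (s : nat -> nat) (N : nat) (u : R) (k : nat) : R :=
  match k with
  | O => u
  | S k' => mR s N (S k') * rem s N u k' - INR (nfloor (mR s N (S k') * rem s N u k'))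
  end.

Definition udig (s : nat -> nat) (N : nat) (u : R) (k : nat) : nat :=
  (s k + nfloor (mR s N k * rem s N u (Nat.pred k)))%nat.

Fixpoint base (s : nat -> nat) (N : nat) (dg : nat -> nat) (n : nat) : R :=
  match n with
  | O => 0
  | S n' => base s N dg n' + (INR (dg (S n')) - INR (s (S n'))) * mu s N (S n')
  end.

Lemma mR_ge s N k : (1 <= k)%nat -> (forall k, (1 <= k)%nat -> (4 <= s k)%nat) -> (2 <= N)%nat ->
  4 <= mR s N k.
Proof.
  intros Hk H4 HN. unfold mR. replace 4 with (INR 4) by (simpl; lra). apply le_INR.
  specialize (H4 k Hk). nia.
Qed.

Lemma mu_pos s N k : (forall k, (1 <= k)%nat -> (4 <= s k)%nat) -> (2 <= N)%nat -> 0 < mu s N k.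
Proof.
  intros H4 HN; induction k; simpl; [lra|].
  apply Rdiv_lt_0_compat; auto. pose proof (mR_ge s N (S k) ltac:(lia) H4 HN). lra.
Qed.

Lemma rem_range s N u k : (forall k, (1 <= k)%nat -> (4 <= s k)%nat) -> (2 <= N)%nat ->
  0 <= u < 1 -> 0 <= rem s N u k < 1.
Proof.
  intros H4 HN Hu; induction k; simpl; auto.
  pose proof (mR_ge s N (S k) ltac:(lia) H4 HN).
  destruct (nfloor_spec (mR s N (S k) * rem s N u k)) as [A B]; [nra|]. lra.
Qed.

Lemma udig_range s N u k : (forall k, (1 <= k)%nat -> (4 <= s k)%nat) -> (2 <= N)%nat ->
  0 <= u < 1 -> (1 <= k)%nat -> (s k <= udig s N u k)%nat /\ (udig s N u k <= N * s k - 1)%nat.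
Proof.
  intros H4 HN Hu Hk. unfold udig. split; [lia|].
  destruct k as [|k]; [lia|]. simpl Nat.pred.
  pose proof (rem_range s N u k H4 HN Hu) as [R1 R2].
  pose proof (mR_ge s N (S k) ltac:(lia) H4 HN).
  destruct (nfloor_spec (mR s N (S k) * rem s N u k)) as [A B]; [nra|].
  assert (INR (nfloor (mR s N (S k) * rem s N u k)) < INR ((N - 1) * s (S k))).
  { unfold mR in *. nra. }
  apply INR_lt in H0. specialize (H4 (S k) ltac:(lia)). nia.
Qed.

Lemma base_decomp s N u n : (forall k, (1 <= k)%nat -> (4 <= s k)%nat) -> (2 <= N)%nat ->
  u = base s N (udig s N u) n + rem s N u n * mu s N n.
Proof.
  intros H4 HN. induction n; simpl; [ring|].
  rewrite IHn at 1. unfold udig. simpl Nat.pred. rewrite plus_INR.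
  pose proof (mR_ge s N (S n) ltac:(lia) H4 HN).
  field. lra.
Qed.

Lemma base_ext s N dg1 dg2 n : (forall k, (1 <= k <= n)%nat -> dg1 k = dg2 k) ->
  base s N dg1 n = base s N dg2 n.
Proof.
  induction n; intros H; simpl; auto.
  rewrite IHn by (intros; apply H; lia). rewrite (H (S n)) by lia. reflexivity.
Qed.
Definition lsum (f : nat -> R) (L : list nat) : R := fold_right (fun i acc => f i + acc) 0 L.

Lemma lsum_nonneg f L : (forall i, 0 <= f i) -> 0 <= lsum f L.
Proof. intros H; induction L; simpl; [lra|]. specialize (H a). lra. Qed.

Lemma lsum_remove f L j : (forall i, 0 <= f i) -> In j L ->
  f j + lsum f (remove Nat.eq_dec j L) <= lsum f L.
Proof.
  intros H; induction L as [|a L IH]; intros Hin; [destruct Hin|]. simpl.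
  destruct (Nat.eq_dec j a) as [->|Hne].
  - destruct (in_dec Nat.eq_dec a L) as [Hi|Hni].
    + specialize (IH Hi). specialize (H a). lra.
    + rewrite notin_remove by auto. lra.
  - simpl. destruct Hin as [->|Hi]; [congruence|]. specialize (IH Hi). lra.
Qed.

Lemma finite_cover (al be : nat -> R) : forall L a c,
  (forall x, a <= x <= c -> exists i, In i L /\ al i < x < be i) ->
  c - a <= lsum (fun i => Rmax 0 (be i - al i)) L.
Proof.
  intros L. remember (length L) as n eqn:Hn. revert L Hn.
  induction n as [n IH] using lt_wf_ind. intros L Hn a c Hc.
  assert (Hf : forall i, 0 <= Rmax 0 (be i - al i)) by (intros; apply Rmax_l).
  destruct (Rlt_le_dec c a) as [Hca|Hac].
  { pose proof (lsum_nonneg _ L Hf). lra. }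
  destruct (Hc c (conj Hac (Rle_refl c))) as [j [Hj [J1 J2]]].
  pose proof (lsum_remove _ L j Hf Hj) as Hrm.
  pose proof (lsum_nonneg _ (remove Nat.eq_dec j L) Hf) as Hnn.
  assert (Hmax : be j - al j <= Rmax 0 (be j - al j)) by apply Rmax_r.
  destruct (Rlt_le_dec (al j) a) as [Hja|Haj].
  - lra.
  - assert (IH' : al j - a <= lsum (fun i => Rmax 0 (be i - al i)) (remove Nat.eq_dec j L)).
    { apply (IH (length (remove Nat.eq_dec j L))); [| reflexivity |].
      - rewrite Hn. apply remove_length_lt; auto.
      - intros x [X1 X2]. assert (X3 : x <= c) by lra. destruct (Hc x (conj X1 X3)) as [i [Hi [I1 I2]]].
        exists i. split; [|lra]. apply in_in_remove; auto. intros ->. lra. }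
    lra.
Qed.

Lemma lsum_app f l1 l2 : lsum f (l1 ++ l2) = lsum f l1 + lsum f l2.
Proof. induction l1; simpl; [ring|]. unfold lsum in *. simpl. rewrite IHl1. ring. Qed.

Lemma lsum_seq f n : lsum f (seq 0 (S n)) = sum_f_R0 f n.
Proof.
  induction n.
  - simpl. ring.
  - rewrite seq_S, lsum_app, IHn. simpl. ring.
Qed.

Lemma finite_sub (b : R) (al be : nat -> R) : 0 <= b ->
  (forall u, 0 <= u <= b -> exists i, al i < u < be i) ->
  exists n, forall u, 0 <= u <= b -> exists i, (i <= n)%nat /\ al i < u < be i.
Proof.
  intros Hb Hc.
  set (S := fun x => 0 <= x <= b /\ exists n, forall y, 0 <= y <= x -> exists i, (i <= n)%nat /\ al i < y < be i).
  assert (HS0 : S 0).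
  { split; [lra|]. destruct (Hc 0 ltac:(lra)) as [i0 Hi0]. exists i0. intros y Hy.
    exists i0. split; [lia|]. replace y with 0 by lra. auto. }
  assert (Hbd : bound S) by (exists b; intros x [Hx _]; lra).
  destruct (completeness S Hbd (ex_intro _ 0 HS0)) as [c [Hub Hlub]].
  assert (Hc0 : 0 <= c) by (apply Hub; auto).
  assert (Hcb : c <= b) by (apply Hlub; intros x [Hx _]; lra).
  destruct (Hc c ltac:(lra)) as [j [J1 J2]].
  set (eta := Rmin (c - al j) (be j - c)).
  assert (Heta : 0 < eta) by (unfold eta; apply Rmin_glb_lt; lra).
  assert (E1 : eta <= c - al j) by apply Rmin_l. assert (E2 : eta <= be j - c) by apply Rmin_r.
  assert (Hx : exists x, S x /\ c - eta < x).
  { apply NNPP. intros Hn.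
    assert (c <= c - eta); [|lra].
    apply Hlub. intros x Sx. destruct (Rle_lt_dec x (c - eta)) as [H|H]; auto.
    exfalso; apply Hn; exists x; auto. }
  destruct Hx as [x [[Sx1 [n Hn]] Hxc]].
  set (y0 := Rmin b (c + eta / 2)).
  assert (Hy0 : S y0).
  { split. split; [unfold y0; apply Rmin_glb; lra | apply Rmin_l].
    exists (Nat.max n j). intros y [Y1 Y2].
    destruct (Rle_lt_dec y x) as [Hyx|Hyx].
    - destruct (Hn y (conj Y1 Hyx)) as [i [Hi HI]]. exists i. split; [lia| auto].
    - exists j. split; [lia|]. assert (y0 <= c + eta/2) by apply Rmin_r. lra. }
  assert (Hy0c : y0 <= c) by (apply Hub; auto).
  assert (Hyb : y0 = b).
  { unfold y0 in *. destruct (Rle_dec b (c + eta/2)).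
    - rewrite Rmin_left; auto.
    - rewrite Rmin_right in Hy0c; lra. }
  rewrite Hyb in Hy0. destruct Hy0 as [_ [n' Hn']]. exists n'. exact Hn'.
Qed.

Lemma cover_len (b A : R) (l r : nat -> R) : 0 <= b ->
  (forall u, 0 <= u <= b -> exists i, l i <= u <= r i) ->
  (forall n, sum_f_R0 (fun i => Rmax 0 (r i - l i)) n <= A) -> b <= A.
Proof.
  intros Hb Hcov HA.
  destruct (Rle_lt_dec b A) as [H|H]; auto. exfalso.
  set (eps := (b - A) / 4).
  assert (Heps : 0 < eps) by (unfold eps; lra).
  set (al := fun i => l i - eps * (1/2)^(S i)). set (be := fun i => r i + eps * (1/2)^(S i)).
  assert (Hp : forall i, 0 < (1/2)^(S i)) by (intros; apply pow_lt; lra).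
  destruct (finite_sub b al be Hb) as [n Hn].
  { intros u Hu. destruct (Hcov u Hu) as [i Hi]. exists i. unfold al, be.
    specialize (Hp i). assert (0 < eps * (1/2)^(S i)) by (apply Rmult_lt_0_compat; lra). lra. }
  assert (Hfin := finite_cover al be (seq 0 (S n)) 0 b).
  assert (Hle : b - 0 <= lsum (fun i => Rmax 0 (be i - al i)) (seq 0 (S n))).
  { apply Hfin. intros x Hx. destruct (Hn x Hx) as [i [Hi HI]]. exists i. split; auto.
    apply in_seq. lia. }
  rewrite lsum_seq in Hle.
  assert (Hsum : sum_f_R0 (fun i => Rmax 0 (be i - al i)) n <=
                 sum_f_R0 (fun i => Rmax 0 (r i - l i)) n + sum_f_R0 (fun i => 2 * eps * (1/2)^(S i)) n).
  { rewrite <- sum_plus. apply sum_Rle. intros i _. unfold al, be.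
    specialize (Hp i). unfold Rmax. destruct (Rle_dec 0 (r i - l i)); destruct (Rle_dec 0 _); nra. }
  assert (Hgeo : sum_f_R0 (fun i => 2 * eps * (1/2)^(S i)) n <= 2 * eps).
  { rewrite (sum_eq _ (fun i => (1/2)^(S i) * (2 * eps))) by (intros; ring).
    rewrite <- (scal_sum (fun i => (1/2)^(S i)) n (2*eps)).
    assert (sum_f_R0 (fun i => (1/2)^(S i)) n <= 1).
    { assert (G : forall m, sum_f_R0 (fun i => (1/2)^(S i)) m = 1 - (1/2)^(S m)).
      { induction m; [simpl; field|].
        change (sum_f_R0 (fun i => (1/2)^(S i)) (S m)) with (sum_f_R0 (fun i => (1/2)^(S i)) m + (1/2)^(S (S m))).
        rewrite IHm. simpl. field. }
      rewrite G. specialize (Hp n). lra. }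
    nra. }
  specialize (HA n). unfold eps in *. lra.
Qed.
Lemma lub_spec (E : Rbar -> Prop) : Rbar_is_lub E (Rbar_lub E).
Proof. unfold Rbar_lub. destruct (Rbar_ex_lub E); auto. Qed.

Lemma glb_spec (E : Rbar -> Prop) : Rbar_is_glb E (Rbar_glb E).
Proof. unfold Rbar_glb. destruct (Rbar_ex_glb E); auto. Qed.

Lemma diam_le (U : R -> Prop) (D : R) : 0 <= D ->
  (forall x y, U x -> U y -> Rabs (x - y) <= D) ->
  Rbar_le (diam U) (Finite D) /\ real (diam U) <= D /\ 0 <= real (diam U).
Proof.
  intros HD H. destruct (lub_spec (fun r => exists x y, U x /\ U y /\ r = Finite (Rabs (x - y)))) as [Hub Hl].
  fold (diam U) in Hub, Hl.
  assert (H1 : Rbar_le (diam U) (Finite D)).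
  { apply Hl. intros v [x [y [Hx [Hy ->]]]]. simpl. apply H; auto. }
  split; auto.
  destruct (diam U) as [r| |] eqn:E; simpl in *; try lra; try contradiction.
  destruct (classic (exists x, U x)) as [[x Hx]|Hn].
  - assert (Rbar_le (Finite (Rabs (x - x))) (Finite r)) by (apply Hub; exists x, x; auto).
    simpl in H0. pose proof (Rabs_pos (x - x)). lra.
  - (* empty set: diam = m_infty, contradiction with finite r *)
    exfalso. apply (Hl m_infty). intros v [x [y [Hx _]]]. exfalso; apply Hn; exists x; auto.
Qed.

Lemma diam_ge (U : R -> Prop) (delta : R) x y :
  Rbar_le (diam U) (Finite delta) -> U x -> U y -> Rabs (x - y) <= real (diam U).
Proof.
  intros Hd Hx Hy. destruct (lub_spec (fun r => exists x y, U x /\ U y /\ r = Finite (Rabs (x - y)))) as [Hub Hl].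
  fold (diam U) in Hub, Hl.
  assert (Rbar_le (Finite (Rabs (x - y))) (diam U)) by (apply Hub; exists x, y; auto).
  destruct (diam U); simpl in *; try contradiction; auto.
Qed.

Lemma powt_nonneg d t : 0 <= powt d t.
Proof. unfold powt. destruct (Rle_dec d 0); [lra|]. unfold Rpower. left; apply exp_pos. Qed.

Lemma powt_le d D t : 0 <= t -> d <= D -> 0 < D -> powt d t <= Rpower D t.
Proof.
  intros Ht H HD. unfold powt. destruct (Rle_dec d 0).
  - unfold Rpower; left; apply exp_pos.
  - apply Rle_Rpower_l; auto. lra.
Qed.

Lemma series_nonneg f : (forall i, 0 <= f i) -> Rbar_le (Finite 0) (Rbar_series f).
Proof.
  intros H. destruct (lub_spec (fun v => exists n, v = Finite (sum_f_R0 f n))) as [Hub _].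
  fold (Rbar_series f) in Hub. eapply Rbar_le_trans; [|apply Hub; exists O; reflexivity].
  simpl. apply H.
Qed.

Lemma series_le f A : (forall n, sum_f_R0 f n <= A) -> Rbar_le (Rbar_series f) (Finite A).
Proof.
  intros H. destruct (lub_spec (fun v => exists n, v = Finite (sum_f_R0 f n))) as [_ Hl].
  apply Hl. intros v [n ->]. simpl. apply H.
Qed.

Lemma series_ge f (c : R) : (forall S, (forall n, sum_f_R0 f n <= S) -> c <= S) ->
  Rbar_le (Finite c) (Rbar_series f).
Proof.
  intros H. destruct (lub_spec (fun v => exists n, v = Finite (sum_f_R0 f n))) as [Hub _].
  fold (Rbar_series f) in Hub.
  destruct (Rbar_series f) as [S| |] eqn:E; simpl; auto.
  - apply H. intros n. assert (Rbar_le (Finite (sum_f_R0 f n)) (Finite S)) by (apply Hub; exists n; auto).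
    simpl in H0; auto.
  - assert (Rbar_le (Finite (sum_f_R0 f 0)) m_infty) by (apply Hub; exists O; auto). simpl in H0; auto.
Qed.

Lemma content_zero (t delta : R) (E : R -> Prop) :
  (forall eps, 0 < eps -> exists U : nat -> (R -> Prop),
     (forall x, E x -> exists i, U i x) /\ (forall i, Rbar_le (diam (U i)) (Finite delta)) /\
     Rbar_le (Rbar_series (fun i => powt (real (diam (U i))) t)) (Finite eps)) ->
  hausdorff_content t delta E = Finite 0.
Proof.
  intros H. unfold hausdorff_content.
  destruct (glb_spec (fun v => exists U : nat -> (R -> Prop),
    (forall x, E x -> exists i, U i x) /\
    (forall i, Rbar_le (diam (U i)) (Finite delta)) /\
    v = Rbar_series (fun i => powt (real (diam (U i))) t))) as [Hlb Hg].
  set (g := Rbar_glb _) in *.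
  assert (H0 : Rbar_le (Finite 0) g).
  { apply Hg. intros v [U [_ [_ ->]]]. apply series_nonneg. intros; apply powt_nonneg. }
  assert (H1 : forall eps, 0 < eps -> Rbar_le g (Finite eps)).
  { intros eps He. destruct (H eps He) as [U [A [B C]]].
    eapply Rbar_le_trans; [apply Hlb; exists U; split; [exact A| split; [exact B| reflexivity]]|]. exact C. }
  destruct g as [r| |]; simpl in *; try contradiction.
  - f_equal. destruct (Rle_lt_dec r 0) as [Hr|Hr]; [lra|]. specialize (H1 (r/2) ltac:(lra)). simpl in H1. lra.
  - specialize (H1 1 ltac:(lra)). simpl in H1. contradiction.
Qed.

Lemma measure_zero (t : R) (E : R -> Prop) :
  (forall delta, 0 < delta -> hausdorff_content t delta E = Finite 0) -> hausdorff_measure t E = Finite 0.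
Proof.
  intros H. unfold hausdorff_measure. apply Rbar_is_lub_unique. split.
  - intros v [d [Hd ->]]. rewrite H; simpl; auto; lra.
  - intros b Hb. apply Hb. exists 1. split; [lra|]. rewrite H; auto; lra.
Qed.

Lemma measure_pos (t : R) (E : R -> Prop) (delta c : R) : 0 < delta -> 0 < c ->
  (forall U : nat -> (R -> Prop), (forall x, E x -> exists i, U i x) ->
     (forall i, Rbar_le (diam (U i)) (Finite delta)) ->
     Rbar_le (Finite c) (Rbar_series (fun i => powt (real (diam (U i))) t))) ->
  hausdorff_measure t E <> Finite 0.
Proof.
  intros Hd Hc H Heq.
  assert (Hcont : Rbar_le (Finite c) (hausdorff_content t delta E)).
  { unfold hausdorff_content.
    destruct (glb_spec (fun v => exists U : nat -> (R -> Prop),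
      (forall x, E x -> exists i, U i x) /\
      (forall i, Rbar_le (diam (U i)) (Finite delta)) /\
      v = Rbar_series (fun i => powt (real (diam (U i))) t))) as [_ Hg].
    apply Hg. intros v [U [A [B ->]]]. apply H; auto. }
  assert (Hm : Rbar_le (hausdorff_content t delta E) (hausdorff_measure t E)).
  { unfold hausdorff_measure.
    destruct (lub_spec (fun v => exists delta, 0 < delta /\ v = hausdorff_content t delta E)) as [Hub _].
    apply Hub. exists delta; auto. }
  rewrite Heq in Hm. pose proof (Rbar_le_trans _ _ _ Hcont Hm). simpl in H0. lra.
Qed.
Fixpoint Mn (s : nat -> nat) (N k : nat) : nat :=
  match k with O => 1%nat | S k' => (Mn s N k' * ((N - 1) * s (S k')))%nat end.

Fixpoint enc (s : nat -> nat) (N : nat) (x : R) (k : nat) : nat :=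
  match k with
  | O => O
  | S k' => (enc s N x k' + Mn s N k' * (luroth_a1 (Lit k' x) - s (S k')))%nat
  end.

Lemma Mn_pos s N k : (forall k, (1 <= k)%nat -> (4 <= s k)%nat) -> (2 <= N)%nat -> (1 <= Mn s N k)%nat.
Proof. intros H4 HN; induction k; simpl; auto. specialize (H4 (S k) ltac:(lia)). nia. Qed.

Lemma enc_lt s N x k : (forall k, (1 <= k)%nat -> (4 <= s k)%nat) -> (2 <= N)%nat -> Ein s N x ->
  (enc s N x k < Mn s N k)%nat.
Proof.
  intros H4 HN HE; induction k; simpl; [lia|].
  destruct (Ein_dig _ _ _ k HE) as [D1 D2].
  specialize (H4 (S k) ltac:(lia)).
  assert (luroth_a1 (Lit k x) - s (S k) <= (N - 1) * s (S k) - 1)%nat by nia.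
  nia.
Qed.

Lemma divmod_uniq (M q1 q2 r1 r2 : nat) : (r1 < M)%nat -> (r2 < M)%nat ->
  (r1 + M * q1 = r2 + M * q2)%nat -> q1 = q2 /\ r1 = r2.
Proof.
  intros H1 H2 H.
  assert (q1 = q2).
  { destruct (lt_eq_lt_dec q1 q2) as [[C|C]|C]; auto; exfalso; nia. }
  subst; split; auto; lia.
Qed.

Lemma enc_inj s N x y k : (forall k, (1 <= k)%nat -> (4 <= s k)%nat) -> (2 <= N)%nat ->
  Ein s N x -> Ein s N y -> enc s N x k = enc s N y k -> agree k x y.
Proof.
  intros H4 HN Hx Hy. induction k; intros He.
  - intros j Hj; lia.
  - simpl in He.
    destruct (divmod_uniq _ _ _ _ _ (enc_lt s N x k H4 HN Hx) (enc_lt s N y k H4 HN Hy) He) as [Q R].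
    specialize (IHk R).
    destruct (Ein_dig _ _ _ k Hx) as [D1 _]. destruct (Ein_dig _ _ _ k Hy) as [D2 _].
    intros j Hj. destruct (Nat.eq_dec j k) as [->|Hne].
    + lia.
    + apply IHk; lia.
Qed.

Lemma Mn_INR s N k : (1 <= N)%nat -> INR (Mn s N k) = (INR N - 1)^k * prod_s s k.
Proof.
  intros HN. induction k; [simpl; lra|]. cbn [Mn prod_s].
  rewrite !mult_INR, IHk, minus_INR by lia. change (INR 1) with 1. simpl. ring.
Qed.

Lemma sum_bounded (f : nat -> R) (M : nat) (c : R) : 0 <= c ->
  (forall j, 0 <= f j <= c) -> (forall j, (M <= j)%nat -> f j = 0) ->
  forall n, sum_f_R0 f n <= INR M * c.
Proof.
  intros Hc Hf H0 n.
  assert (G : sum_f_R0 f n <= INR (Nat.min (S n) M) * c).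
  { induction n; simpl sum_f_R0.
    - destruct M; simpl. rewrite H0 by lia. lra. destruct M; simpl; specialize (Hf O); lra.
    - destruct (le_lt_dec M (S n)) as [HM|HM].
      + rewrite H0 by lia. rewrite Nat.min_r by lia. rewrite Nat.min_r in IHn by lia. lra.
      + rewrite Nat.min_l by lia. rewrite Nat.min_l in IHn by lia. rewrite S_INR. specialize (Hf (S n)). lra. }
  apply Rle_trans with (1 := G). apply Rmult_le_compat_r; auto. apply le_INR. lia.
Qed.

Lemma prod_s_pow s (B K : nat) : (forall k, (K <= k)%nat -> (B <= s k)%nat) ->
  (forall k, (1 <= k)%nat -> (4 <= s k)%nat) ->
  forall m, (K <= m)%nat -> INR B ^ (m - K) <= prod_s s m.
Proof.
  intros HB H4 m Hm. induction Hm.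
  - rewrite Nat.sub_diag. simpl. apply prod_s_pos; auto.
  - replace (S m - K)%nat with (S (m - K)) by lia. simpl.
    assert (INR B <= INR (s (S m))) by (apply le_INR; apply HB; lia).
    assert (0 <= INR B) by apply pos_INR.
    assert (0 <= INR B ^ (m - K)) by (apply pow_le; auto).
    rewrite Rmult_comm. apply Rmult_le_compat; auto.
Qed.

Lemma prod_s_ge4 s m : (forall k, (1 <= k)%nat -> (4 <= s k)%nat) -> (1 <= m)%nat -> 4 <= prod_s s m.
Proof.
  intros H4 Hm. destruct m; [lia|]. simpl.
  pose proof (prod_s_pos s m H4).
  assert (4 <= INR (s (S m))) by (replace 4 with (INR 4) by (simpl; lra); apply le_INR; apply H4; lia).
  nra.
Qed.
Lemma Lit_upper s N x m : (forall k, (1 <= k)%nat -> (4 <= s k)%nat) -> Ein s N x ->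
  0 < Lit m x <= / (INR (s (S m)) - 1).
Proof.
  intros H4 HE. pose proof (Lit_range m x (proj1 HE)) as HR.
  destruct (a1_spec _ HR) as [_ [[_ H2] _]].
  destruct (Ein_dig _ _ _ m HE) as [D1 _].
  assert (4 <= INR (s (S m))) by (replace 4 with (INR 4) by (simpl; lra); apply le_INR; apply H4; lia).
  assert (INR (s (S m)) <= INR (luroth_a1 (Lit m x))) by (apply le_INR; auto).
  split; [lra|]. apply Rle_trans with (1 := H2). apply Rinv_le_contravar; lra.
Qed.

Definition Dm (s : nat -> nat) (m : nat) : R := (4/3)^(S m) / (prod_s s m ^ 2 * INR (s (S m))).

Lemma upper_cover s N m t : (forall k, (1 <= k)%nat -> (4 <= s k)%nat) -> (2 <= N)%nat -> 0 < t ->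
  exists U : nat -> (R -> Prop),
    (forall x, Ein s N x -> exists i, U i x) /\
    (forall i, Rbar_le (diam (U i)) (Finite (Dm s m))) /\
    Rbar_le (Rbar_series (fun i => powt (real (diam (U i))) t))
            (Finite (INR (Mn s N m) * Rpower (Dm s m) t)).
Proof.
  intros H4 HN Ht.
  set (U := fun j x => Ein s N x /\ enc s N x m = j).
  assert (HP : 1 <= prod_s s m) by (apply prod_s_pos; auto).
  assert (HS : 4 <= INR (s (S m))) by (replace 4 with (INR 4) by (simpl; lra); apply le_INR; apply H4; lia).
  assert (HD : 0 < Dm s m).
  { unfold Dm. apply Rdiv_lt_0_compat. apply pow_lt; lra. apply Rmult_lt_0_compat; [apply pow_lt|]; lra. }
  assert (Hdist : forall j x y, U j x -> U j y -> Rabs (x - y) <= Dm s m).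
  { intros j x y [Hx Ex] [Hy Ey].
    assert (Hag : agree m x y) by (apply (enc_inj s N x y m H4 HN Hx Hy); congruence).
    rewrite (shared m x y (proj1 Hx) (proj1 Hy) Hag).
    pose proof (Lit_upper s N x m H4 Hx). pose proof (Lit_upper s N y m H4 Hy).
    destruct (Bd_bounds s N x m H4 HN Hx) as [B1 _].
    pose proof (Bd_pos x m (proj1 Hx)) as B0.
    rewrite Rabs_mult, (Rabs_pos_eq (Bd x m)) by lra.
    assert (Rabs (Lit m x - Lit m y) <= / (INR (s (S m)) - 1)) by (apply Rabs_le; lra).
    assert (/ (INR (s (S m)) - 1) <= (4/3) / INR (s (S m))).
    { apply (Rmult_le_reg_r ((INR (s (S m)) - 1) * INR (s (S m)))); [nra|].
      field_simplify; lra. }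
    assert (Bd x m <= (4/3)^m / prod_s s m ^ 2).
    { apply (Rmult_le_reg_r (prod_s s m ^ 2)); [nra|]. field_simplify; nra. }
    unfold Dm. apply Rle_trans with ((4/3)^m / prod_s s m ^ 2 * ((4/3) / INR (s (S m)))).
    - apply Rmult_le_compat; try lra. apply Rabs_pos.
    - right. simpl. field. lra. }
  exists U. split; [|split].
  - intros x Hx. exists (enc s N x m). split; auto.
  - intros i. apply diam_le; [lra|]. intros x y; apply Hdist.
  - apply series_le. apply sum_bounded.
    + left. unfold Rpower. apply exp_pos.
    + intros j. split; [apply powt_nonneg|]. apply powt_le; [lra| |auto].
      apply diam_le; [lra|]. intros x y; apply Hdist.
    + intros j Hj.
      assert (Hr : real (diam (U j)) <= 0).
      { apply diam_le; [lra|]. intros x y [Hx Ex] _. exfalso.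
        pose proof (enc_lt s N x m H4 HN Hx). lia. }
      unfold powt. destruct (Rle_dec _ 0); [reflexivity| lra].
Qed.
Lemma ln_le' x y : 0 < x -> x <= y -> ln x <= ln y.
Proof. intros H1 [H|H]; [left; apply ln_increasing; auto| subst; lra]. Qed.

Lemma exp_le' x y : x <= y -> exp x <= exp y.
Proof. intros [H|H]; [left; apply exp_increasing; auto| subst; lra]. Qed.

Lemma ln_pos' x : 1 < x -> 0 < ln x.
Proof. intros H. rewrite <- ln_1. apply ln_increasing; lra. Qed.

Lemma ln_nonneg' x : 1 <= x -> 0 <= ln x.
Proof. intros H. rewrite <- ln_1. apply ln_le'; lra. Qed.

Lemma big_nat (A : R) : exists n : nat, A <= INR n.
Proof. destruct (INR_unbounded A) as [n Hn]. exists n. lra. Qed.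

Lemma big_ln_nat (X : R) : exists B : nat, (1 <= B)%nat /\ X <= ln (INR B).
Proof.
  destruct (big_nat (exp X)) as [n Hn]. exists (S n). split; [lia|].
  rewrite <- (ln_exp X). apply ln_le'; [apply exp_pos|]. rewrite S_INR. lra.
Qed.

Lemma ln_prod_lower s (B K : nat) m : (1 <= B)%nat -> (forall k, (K <= k)%nat -> (B <= s k)%nat) ->
  (forall k, (1 <= k)%nat -> (4 <= s k)%nat) -> (K <= m)%nat ->
  (INR m - INR K) * ln (INR B) <= ln (prod_s s m).
Proof.
  intros HB1 HB H4 Hm.
  assert (0 < INR B) by (apply (lt_INR 0); lia).
  rewrite <- minus_INR by auto. rewrite <- ln_pow by auto.
  apply ln_le'; [apply pow_lt; auto|]. apply prod_s_pow; auto.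
Qed.

Lemma ln_Dm s m : (forall k, (1 <= k)%nat -> (4 <= s k)%nat) ->
  ln (Dm s m) = (INR m + 1) * ln (4/3) - (2 * ln (prod_s s m) + ln (INR (s (S m)))).
Proof.
  intros H4. unfold Dm.
  assert (HP : 1 <= prod_s s m) by (apply prod_s_pos; auto).
  assert (HS : 4 <= INR (s (S m))) by (replace 4 with (INR 4) by (simpl; lra); apply le_INR; apply H4; lia).
  unfold Rdiv. rewrite ln_mult, ln_Rinv, ln_mult, ln_pow, ln_pow, S_INR; try lra; try apply pow_lt; try lra.
  simpl INR. ring. apply Rmult_lt_0_compat; [apply pow_lt|]; lra. apply Rinv_0_lt_compat.
  apply Rmult_lt_0_compat; [apply pow_lt|]; lra.
Qed.

Lemma s0_term_lt s m t' : (forall k, (1 <= k)%nat -> (4 <= s k)%nat) -> (1 <= m)%nat ->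
  s0_term s m < t' -> ln (prod_s s m) < t' * (2 * ln (prod_s s m) + ln (INR (s (S m)))).
Proof.
  intros H4 Hm H. unfold s0_term in H.
  assert (0 < ln (prod_s s m)) by (apply ln_pos'; pose proof (prod_s_ge4 s m H4 Hm); lra).
  assert (0 < ln (INR (s (S m)))).
  { apply ln_pos'. replace 1 with (INR 1) by reflexivity. apply lt_INR. specialize (H4 (S m) ltac:(lia)). lia. }
  apply (Rmult_lt_compat_r (2 * ln (prod_s s m) + ln (INR (s (S m))))) in H; [|lra].
  unfold Rdiv in H. rewrite Rmult_assoc, Rinv_l in H by lra. lra.
Qed.

Lemma s0_term_gt s m t' : (forall k, (1 <= k)%nat -> (4 <= s k)%nat) -> (1 <= m)%nat ->
  t' < s0_term s m -> t' * (2 * ln (prod_s s m) + ln (INR (s (S m)))) < ln (prod_s s m).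
Proof.
  intros H4 Hm H. unfold s0_term in H.
  assert (0 < ln (prod_s s m)) by (apply ln_pos'; pose proof (prod_s_ge4 s m H4 Hm); lra).
  assert (0 < ln (INR (s (S m)))).
  { apply ln_pos'. replace 1 with (INR 1) by reflexivity. apply lt_INR. specialize (H4 (S m) ltac:(lia)). lia. }
  apply (Rmult_lt_compat_r (2 * ln (prod_s s m) + ln (INR (s (S m))))) in H; [|lra].
  unfold Rdiv in H. rewrite Rmult_assoc, Rinv_l in H by lra. lra.
Qed.

Lemma s0_term_range s m : (forall k, (1 <= k)%nat -> (4 <= s k)%nat) -> (1 <= m)%nat ->
  0 <= s0_term s m <= 1/2.
Proof.
  intros H4 Hm. unfold s0_term.
  assert (0 < ln (prod_s s m)) by (apply ln_pos'; pose proof (prod_s_ge4 s m H4 Hm); lra).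
  assert (0 < ln (INR (s (S m)))).
  { apply ln_pos'. replace 1 with (INR 1) by reflexivity. apply lt_INR. specialize (H4 (S m) ltac:(lia)). lia. }
  split. apply Rdiv_le_0_compat; lra.
  apply (Rmult_le_reg_r (2 * ln (prod_s s m) + ln (INR (s (S m))))); [lra|].
  unfold Rdiv. rewrite Rmult_assoc, Rinv_l by lra. lra.
Qed.

Lemma upper_main s N l t : (forall k, (1 <= k)%nat -> (4 <= s k)%nat) -> (2 <= N)%nat ->
  (forall M : nat, exists K : nat, forall n, (K <= n)%nat -> (M <= s n)%nat) ->
  0 <= l -> l < t ->
  (forall t', l < t' -> forall K, exists n, (K <= n)%nat /\ s0_term s (S n) < t') ->
  hausdorff_measure t (Ein s N) = Finite 0.
Proof.
  intros H4 HN Hinf Hl Hlt Hli.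
  apply measure_zero. intros delta Hdelta. apply content_zero. intros eps Heps.
  set (t' := (l + t) / 2).
  assert (HN1 : 1 <= INR N - 1) by (pose proof (INR_ge2 N HN); lra).
  set (lnN1 := ln (INR N - 1)). assert (HlnN1 : 0 <= lnN1) by (apply ln_nonneg'; lra).
  set (L43 := ln (4/3)). assert (HL43 : 0 < L43) by (apply ln_pos'; lra).
  set (c0 := lnN1 + t * L43).
  assert (Hc0 : 0 <= c0) by (unfold c0; nra).
  destruct (big_ln_nat (Rmax ((c0 + 1) / (2 * (t - t'))) ((L43 + 1) / 2))) as [B [HB1 HlnB]].
  set (lnB := ln (INR B)) in *.
  assert (HlnB1 : (c0 + 1) / (2 * (t - t')) <= lnB) by (eapply Rle_trans; [apply Rmax_l| exact HlnB]).
  assert (HlnB2 : (L43 + 1) / 2 <= lnB) by (eapply Rle_trans; [apply Rmax_r| exact HlnB]).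
  assert (Htt : 0 < t - t') by (unfold t'; lra).
  assert (HB1' : c0 + 1 <= 2 * (t - t') * lnB).
  { apply (Rmult_le_compat_l (2 * (t - t'))) in HlnB1; [|lra].
    replace (2 * (t - t') * ((c0 + 1) / (2 * (t - t')))) with (c0 + 1) in HlnB1 by (field; lra). lra. }
  destruct (Hinf B) as [K HK].
  set (R1 := INR K * (c0 + 1) + c0 - ln eps).
  set (R2 := L43 + INR K * (L43 + 1) - ln delta).
  destruct (big_nat (Rmax R1 R2 + INR K)) as [K0 HK0].
  destruct (Hli t' ltac:(unfold t'; lra) (Nat.max K0 K)) as [n [Hn Hs0]].
  set (m := S n) in *.
  assert (Hm1 : (1 <= m)%nat) by (unfold m; lia).
  assert (HmK0 : INR K0 <= INR m) by (apply le_INR; unfold m; lia).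
  assert (Hmr1 : R1 <= INR m - INR K) by (pose proof (Rmax_l R1 R2); lra).
  assert (Hmr2 : R2 <= INR m - INR K) by (pose proof (Rmax_r R1 R2); lra).
  assert (HKm : (K <= m)%nat) by (unfold m; lia).
  pose proof (ln_prod_lower s B K m HB1 HK H4 HKm) as Hp. fold lnB in Hp.
  pose proof (s0_term_lt s m t' H4 Hm1 Hs0) as Hs.
  set (p := ln (prod_s s m)) in *. set (sg := ln (INR (s (S m)))) in *.
  assert (Hp0 : 0 < p) by (apply ln_pos'; pose proof (prod_s_ge4 s m H4 Hm1); lra).
  assert (Hsg : 0 < sg).
  { apply ln_pos'. replace 1 with (INR 1) by reflexivity. apply lt_INR. specialize (H4 (S m) ltac:(lia)). lia. }
  assert (HmK : 0 <= INR m - INR K) by (rewrite <- minus_INR by auto; apply pos_INR).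
  destruct (upper_cover s N m t H4 HN ltac:(unfold t' in *; lra)) as [U [HU1 [HU2 HU3]]].
  pose proof (ln_Dm s m H4) as HlnD. fold p sg L43 in HlnD.
  assert (HD : 0 < Dm s m).
  { unfold Dm. pose proof (prod_s_pos s m H4).
    assert (4 <= INR (s (S m))) by (replace 4 with (INR 4) by (simpl; lra); apply le_INR; apply H4; lia).
    apply Rdiv_lt_0_compat. apply pow_lt; lra. apply Rmult_lt_0_compat; [apply pow_lt|]; lra. }
  exists U. split; auto. split.
  - intros i. eapply Rbar_le_trans; [apply HU2|]. change (Dm s m <= delta).
    rewrite <- (exp_ln (Dm s m)) by auto. rewrite <- (exp_ln delta) by auto. apply exp_le'.
    rewrite HlnD. unfold R2 in Hmr2.
    assert (0 <= (INR m - INR K) * (2 * lnB - (L43 + 1))) by (apply Rmult_le_pos; lra).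
    assert (2 * p >= 2 * (INR m - INR K) * lnB) by lra.
    pose proof (pos_INR K). lra.
  - eapply Rbar_le_trans; [apply HU3|]. change (INR (Mn s N m) * Rpower (Dm s m) t <= eps).
    rewrite Mn_INR by lia.
    assert (HPm : 0 < prod_s s m) by (pose proof (prod_s_ge4 s m H4 Hm1); lra).
    replace ((INR N - 1) ^ m * prod_s s m * Rpower (Dm s m) t)
      with (exp (INR m * lnN1 + p + t * ln (Dm s m))).
    2:{ rewrite !exp_plus. unfold Rpower, p, lnN1. rewrite exp_ln by auto.
        rewrite <- ln_pow by lra. rewrite exp_ln by (apply pow_lt; lra). ring. }
    rewrite <- (exp_ln eps) by auto. apply exp_le'.
    rewrite HlnD. unfold R1 in Hmr1.
    assert (E1 : 0 <= (t - t') * (p - (INR m - INR K) * lnB)) by (apply Rmult_le_pos; lra).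
    assert (E2 : 0 <= (INR m - INR K) * (2 * (t - t') * lnB - (c0 + 1))) by (apply Rmult_le_pos; lra).
    assert (E3 : 0 <= (t - t') * sg) by (apply Rmult_le_pos; lra).
    assert (E4 : 0 <= INR m * lnN1) by (apply Rmult_le_pos; [apply pos_INR|lra]).
    pose proof (pos_INR K). unfold c0 in *. nra.
Qed.
Lemma mu_Mn s N n : (forall k, (1 <= k)%nat -> (4 <= s k)%nat) -> (2 <= N)%nat ->
  mu s N n * INR (Mn s N n) = 1.
Proof.
  intros H4 HN. induction n; simpl mu; simpl Mn; [simpl; lra|].
  rewrite mult_INR. unfold mR in *. pose proof (mR_ge s N (S n) ltac:(lia) H4 HN). unfold mR in H.
  replace (mu s N n / INR ((N - 1) * s (S n)) * (INR (Mn s N n) * INR ((N - 1) * s (S n))))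
    with (mu s N n * INR (Mn s N n)) by (field; lra). auto.
Qed.

Lemma mu_small s N n : (forall k, (1 <= k)%nat -> (4 <= s k)%nat) -> (2 <= N)%nat ->
  mu s N n <= / (INR n + 1).
Proof.
  intros H4 HN. induction n; simpl mu; [simpl; lra|].
  pose proof (mR_ge s N (S n) ltac:(lia) H4 HN). pose proof (mu_pos s N n H4 HN).
  pose proof (pos_INR n). rewrite S_INR.
  apply Rle_trans with (mu s N n / 4).
  - unfold Rdiv. apply Rmult_le_compat_l; [lra|]. apply Rinv_le_contravar; lra.
  - apply Rle_trans with (/ (INR n + 1) / 4); [unfold Rdiv; apply Rmult_le_compat_r; lra|].
    apply (Rmult_le_reg_r (4 * (INR n + 1) * (INR n + 1 + 1))); [nra|]. field_simplify; nra.
Qed.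

Definition G (s : nat -> nat) (N k : nat) : R := / (INR N ^ k * prod_s s k) ^ 2.

Lemma G_pos s N k : (forall k, (1 <= k)%nat -> (4 <= s k)%nat) -> (2 <= N)%nat -> 0 < G s N k.
Proof.
  intros H4 HN. unfold G. apply Rinv_0_lt_compat. pose proof (prod_s_pos s k H4).
  pose proof (INR_ge2 N HN). assert (0 < INR N ^ k) by (apply pow_lt; lra). apply pow_lt. nra.
Qed.

Lemma G_S s N k : (forall k, (1 <= k)%nat -> (4 <= s k)%nat) -> (2 <= N)%nat ->
  G s N (S k) = G s N k / (INR N * INR (s (S k)))^2.
Proof.
  intros H4 HN. unfold G. simpl prod_s. simpl pow.
  pose proof (prod_s_pos s k H4). pose proof (INR_ge2 N HN). assert (0 < INR N ^ k) by (apply pow_lt; lra).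
  assert (4 <= INR (s (S k))) by (replace 4 with (INR 4) by (simpl; lra); apply le_INR; apply H4; lia).
  field. split; [lra|]. split; [lra|]. lra.
Qed.

Lemma G_decr s N k k' : (forall k, (1 <= k)%nat -> (4 <= s k)%nat) -> (2 <= N)%nat -> (k <= k')%nat ->
  G s N k' <= G s N k.
Proof.
  intros H4 HN Hk. induction Hk; [lra|]. rewrite G_S by auto.
  pose proof (G_pos s N m H4 HN). pose proof (INR_ge2 N HN).
  assert (4 <= INR (s (S m))) by (replace 4 with (INR 4) by (simpl; lra); apply le_INR; apply H4; lia).
  apply Rle_trans with (G s N m); auto.
  apply (Rmult_le_reg_r ((INR N * INR (s (S m)))^2)); [apply pow_lt; nra|].
  replace (G s N m / (INR N * INR (s (S m))) ^ 2 * (INR N * INR (s (S m))) ^ 2) with (G s N m) by (field; nra).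
  assert (1 <= INR N * INR (s (S m))) by nra.
  assert (1 <= (INR N * INR (s (S m))) ^ 2) by (simpl; nra). nra.
Qed.

Lemma gap_G s N x n : (forall k, (1 <= k)%nat -> (4 <= s k)%nat) -> (2 <= N)%nat -> Ein s N x ->
  G s N (S n) <= Bd x n / (INR N * INR (s (S n)))^2.
Proof.
  intros H4 HN HE. rewrite G_S by auto. destruct (Bd_bounds s N x n H4 HN HE) as [_ B2].
  pose proof (INR_ge2 N HN).
  assert (4 <= INR (s (S n))) by (replace 4 with (INR 4) by (simpl; lra); apply le_INR; apply H4; lia).
  unfold Rdiv. apply Rmult_le_compat_r; [apply Rlt_le, Rinv_0_lt_compat; apply pow_lt; nra|].
  unfold G. pose proof (prod_s_pos s n H4). assert (0 < INR N ^ n) by (apply pow_lt; lra).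
  assert (0 < (INR N ^ n * prod_s s n) ^ 2) by (apply pow_lt; nra).
  apply (Rmult_le_reg_r ((INR N ^ n * prod_s s n) ^ 2)); auto. rewrite Rinv_l by lra. lra.
Qed.

Lemma min_pow (L A z t : R) : 0 < t < 1 -> 0 < z -> 0 <= A -> L <= A -> L <= A * z -> L <= A * Rpower z t.
Proof.
  intros Ht Hz HA H1 H2. destruct (Rle_lt_dec 1 z) as [Hz1|Hz1].
  - apply Rle_trans with A; auto. rewrite <- (Rmult_1_r A) at 1. apply Rmult_le_compat_l; auto.
    pose proof (ln_nonneg' z Hz1). unfold Rpower. rewrite <- exp_0. apply exp_le'. nra.
  - apply Rle_trans with (A * z); auto. apply Rmult_le_compat_l; auto.
    assert (ln z < 0) by (rewrite <- ln_1; apply ln_increasing; lra).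
    unfold Rpower. rewrite <- (exp_ln z) at 1 by lra. apply exp_le'. nra.
Qed.

Lemma find_switch (P : nat -> Prop) M : P O -> ~ P M -> exists k, (k < M)%nat /\ P k /\ ~ P (S k).
Proof.
  intros H0. induction M; intros HM; [contradiction|].
  destruct (classic (P M)) as [HP|HP].
  - exists M. split; auto.
  - destruct (IHM HP) as [k [Hk Hk']]. exists k. split; [lia| auto].
Qed.

Lemma real_diam_le (U : R -> Prop) delta x : Rbar_le (diam U) (Finite delta) -> U x -> real (diam U) <= delta.
Proof.
  intros Hd Hx. destruct (lub_spec (fun r => exists x y, U x /\ U y /\ r = Finite (Rabs (x - y)))) as [Hub Hl].
  fold (diam U) in Hub, Hl.
  assert (Rbar_le (Finite (Rabs (x - x))) (diam U)) by (apply Hub; exists x, x; auto).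
  destruct (diam U); simpl in *; auto; contradiction.
Qed.
Definition dgx (x : R) : nat -> nat := fun k => luroth_a1 (Lit (Nat.pred k) x).

Lemma key_bound s N t n B d : (forall k, (1 <= k)%nat -> (4 <= s k)%nat) -> (2 <= N)%nat -> 0 < t ->
  - ln (prod_s s n) + t * ln (INR (s (S n))) + 2 * t * (INR n * ln (INR N) + ln (prod_s s n)) <= 0 ->
  0 < B -> 1 <= B * (INR N ^ n * prod_s s n)^2 -> 0 < d ->
  mu s N n * Rpower (7 * INR N ^ 2 * INR (s (S n)) * d / B) t <= Rpower (7 * INR N ^ 2) t * Rpower d t.
Proof.
  intros H4 HN Ht Has HB HB2 Hd.
  pose proof (INR_ge2 N HN) as HN2.
  assert (HS : 4 <= INR (s (S n))) by (replace 4 with (INR 4) by (simpl; lra); apply le_INR; apply H4; lia).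
  assert (HP : 1 <= prod_s s n) by (apply prod_s_pos; auto).
  assert (HNn : 0 < INR N ^ n) by (apply pow_lt; lra).
  assert (HQ : 0 < (INR N ^ n * prod_s s n)^2) by (apply pow_lt; nra).
  assert (H7 : 0 < 7 * INR N ^ 2) by (simpl; nra).
  replace (7 * INR N ^ 2 * INR (s (S n)) * d / B) with ((7 * INR N ^ 2) * (d * (INR (s (S n)) * / B))) by (field; lra).
  remember (7 * INR N ^ 2) as C7.
  remember (INR (s (S n)) * / B) as sB.
  assert (HsB : 0 < sB) by (subst; apply Rmult_lt_0_compat; [lra| apply Rinv_0_lt_compat; lra]).
  rewrite <- (Rpower_mult_distr C7 (d * sB)) by (try apply Rmult_lt_0_compat; lra).
  rewrite <- (Rpower_mult_distr d sB) by lra. subst sB.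
  assert (HR : 0 < Rpower C7 t * Rpower d t) by (unfold Rpower; apply Rmult_lt_0_compat; apply exp_pos).
  replace (mu s N n * (Rpower C7 t * (Rpower d t * Rpower (INR (s (S n)) * / B) t)))
    with ((Rpower C7 t * Rpower d t) * (mu s N n * Rpower (INR (s (S n)) * / B) t)) by ring.
  rewrite <- (Rmult_1_r (Rpower C7 t * Rpower d t)) at 2.
  apply Rmult_le_compat_l; [lra|].
  assert (Hmu : mu s N n <= / prod_s s n).
  { pose proof (mu_Mn s N n H4 HN) as Hm. rewrite Mn_INR in Hm by lia.
    assert (1 <= (INR N - 1)^n) by (apply pow_R1_Rle; lra).
    pose proof (mu_pos s N n H4 HN).
    apply (Rmult_le_reg_r (prod_s s n)); [lra|]. rewrite Rinv_l by lra. nra. }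
  assert (HiB : / B <= (INR N ^ n * prod_s s n)^2).
  { apply (Rmult_le_reg_l B); auto. rewrite Rinv_r by lra. lra. }
  assert (Hpw : Rpower (INR (s (S n)) * / B) t <= Rpower (INR (s (S n)) * (INR N ^ n * prod_s s n)^2) t).
  { apply Rle_Rpower_l; [lra|]. split. apply Rmult_lt_0_compat; [lra| apply Rinv_0_lt_compat; lra].
    apply Rmult_le_compat_l; lra. }
  assert (HE : / prod_s s n * Rpower (INR (s (S n)) * (INR N ^ n * prod_s s n)^2) t <= 1).
  { unfold Rpower. rewrite ln_mult, ln_pow, ln_mult, ln_pow by (try apply pow_lt; nra).
    rewrite <- (exp_ln (/ prod_s s n)) by (apply Rinv_0_lt_compat; lra).
    rewrite <- exp_plus, <- exp_0. apply exp_le'. rewrite ln_Rinv by lra. simpl INR. lra. }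
  assert (0 <= Rpower (INR (s (S n)) * / B) t) by (unfold Rpower; left; apply exp_pos).
  assert (0 <= mu s N n) by (left; apply mu_pos; auto).
  apply Rle_trans with (/ prod_s s n * Rpower (INR (s (S n)) * (INR N ^ n * prod_s s n)^2) t); auto.
  apply Rmult_le_compat; auto.
Qed.
Lemma piece s N t n0 (U : R -> Prop) (eta : R) :
  (forall k, (1 <= k)%nat -> (4 <= s k)%nat) -> (2 <= N)%nat -> 0 < t < 1 ->
  (forall n, (n0 <= n)%nat ->
     - ln (prod_s s n) + t * ln (INR (s (S n))) + 2 * t * (INR n * ln (INR N) + ln (prod_s s n)) <= 0) ->
  Rbar_le (diam U) (Finite (G s N n0 / 3)) -> 0 < eta ->
  exists lo hi,
    (forall u x, 0 <= u <= 1/2 -> Ein s N x -> (forall k, luroth_a1 (Lit k x) = udig s N u (S k)) ->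
       U x -> lo <= u <= hi) /\
    hi - lo <= Rpower (7 * INR N ^ 2) t * powt (real (diam U)) t + eta.
Proof.
  intros H4 HN Ht Has HU Heta.
  assert (HC : 0 <= Rpower (7 * INR N ^ 2) t * powt (real (diam U)) t).
  { apply Rmult_le_pos; [unfold Rpower; left; apply exp_pos| apply powt_nonneg]. }
  destruct (classic (exists x0, U x0 /\ Ein s N x0)) as [[x0 [Ux0 Ex0]]|Hno].
  2:{ exists 2, 2. split; [|lra]. intros u x _ Ex _ Ux. exfalso; apply Hno; exists x; auto. }
  set (d := real (diam U)) in *.
  assert (Hd : forall y, U y -> Rabs (x0 - y) <= d) by (intros y Uy; apply (diam_ge U _ x0 y HU Ux0 Uy)).
  assert (Hdd : d <= G s N n0 / 3) by (apply (real_diam_le U _ x0 HU Ux0)).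
  destruct (big_nat (/ eta)) as [M HM].
  assert (HmuM : mu s N M <= eta).
  { apply Rle_trans with (/ (INR M + 1)); [apply mu_small; auto|].
    rewrite <- (Rinv_inv eta). apply Rinv_le_contravar; [apply Rinv_0_lt_compat; lra| lra]. }
  set (P := fun k => forall y, U y -> Ein s N y -> agree k x0 y).
  assert (Hudig : forall u x k, (forall k, luroth_a1 (Lit k x) = udig s N u (S k)) -> agree k x0 x ->
            forall j, (1 <= j <= k)%nat -> dgx x0 j = udig s N u j).
  { intros u x k Hx Hag j Hj. destruct j as [|j]; [lia|]. unfold dgx. simpl Nat.pred.
    rewrite <- Hx. apply Hag. lia. }
  destruct (classic (P M)) as [HPM|HPM].
  - exists (base s N (dgx x0) M), (base s N (dgx x0) M + mu s N M). split; [|lra].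
    intros u x Hu Ex Hx Ux.
    pose proof (base_decomp s N u M H4 HN) as Hdec.
    rewrite (base_ext s N (udig s N u) (dgx x0) M) in Hdec by (intros j Hj; symmetry; apply (Hudig u x M Hx (HPM x Ux Ex) j Hj)).
    pose proof (rem_range s N u M H4 HN ltac:(lra)). pose proof (mu_pos s N M H4 HN). nra.
  - destruct (find_switch P M) as [n [HnM [HPn HPSn]]]; auto.
    { intros y _ _ k Hk; lia. }
    assert (Hy : exists y, U y /\ Ein s N y /\ luroth_a1 (Lit n x0) <> luroth_a1 (Lit n y)).
    { apply NNPP. intros Hn. apply HPSn. intros y Uy Ey k Hk.
      destruct (Nat.eq_dec k n) as [->|Hne].
      - apply NNPP. intros Hne. apply Hn. exists y. auto.
      - apply (HPn y Uy Ey). lia. }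
    destruct Hy as [y [Uy [Ey Hne]]].
    destruct (gap_count s N x0 y n H4 HN Ex0 Ey (HPn y Uy Ey)) as [Hgap _].
    specialize (Hgap Hne). pose proof (Hd y Uy) as Hdy.
    set (B := Bd x0 n) in *. set (sv := INR (s (S n))) in *.
    pose proof (INR_ge2 N HN) as HN2.
    assert (HS : 4 <= sv) by (unfold sv; replace 4 with (INR 4) by (simpl; lra); apply le_INR; apply H4; lia).
    assert (HB : 0 < B) by (apply Bd_pos, Ex0).
    assert (HNs : 0 < (INR N * sv)^2) by (apply pow_lt; nra).
    assert (Hgd : 2/3 * B / (INR N * sv)^2 <= d) by lra.
    assert (Hgp : 0 < 2/3 * B / (INR N * sv)^2) by (apply Rdiv_lt_0_compat; lra).
    assert (Hn0 : (n0 <= n)%nat).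
    { destruct (le_lt_dec n0 n) as [|Hlt]; auto. exfalso.
      pose proof (G_decr s N (S n) n0 H4 HN Hlt). pose proof (gap_G s N x0 n H4 HN Ex0).
      pose proof (G_pos s N n0 H4 HN). fold B sv in H0.
      assert (2/3 * B / (INR N * sv)^2 = 2/3 * (B / (INR N * sv)^2)) by (field; lra). lra. }
    set (Kr := 1 + (INR N * sv)^2 * d / B).
    assert (HK : forall x, U x -> Ein s N x -> Rabs (INR (luroth_a1 (Lit n x0)) - INR (luroth_a1 (Lit n x))) <= Kr).
    { intros x Ux Ex. destruct (gap_count s N x0 x n H4 HN Ex0 Ex (HPn x Ux Ex)) as [_ Hc].
      fold B sv in Hc. unfold Kr. apply Rle_trans with (1 := Hc).
      apply Rplus_le_compat_l. unfold Rdiv. apply Rmult_le_compat_r; [apply Rlt_le, Rinv_0_lt_compat; lra|].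
      apply Rmult_le_compat_l; [lra| apply Hd; auto]. }
    set (a0 := INR (luroth_a1 (Lit n x0))) in *.
    set (mun := mu s N n). set (mu1 := mu s N (S n)).
    assert (Hmun : 0 < mun) by (apply mu_pos; auto).
    assert (HmR : 4 <= mR s N (S n)) by (apply mR_ge; auto; lia).
    assert (Hmu1 : mu1 = mun / mR s N (S n)) by reflexivity.
    assert (HmRsv : sv <= mR s N (S n)).
    { unfold mR, sv. apply le_INR. nia. }
    set (bn := base s N (dgx x0) n).
    assert (Hdec2 : forall u x, 0 <= u <= 1/2 -> Ein s N x -> (forall k, luroth_a1 (Lit k x) = udig s N u (S k)) ->
              U x -> u = bn + (INR (luroth_a1 (Lit n x)) - sv) * mu1 + rem s N u (S n) * mu1 /\
                     u = bn + rem s N u n * mun).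
    { intros u x Hu Ex Hx Ux.
      pose proof (base_decomp s N u (S n) H4 HN) as D1. pose proof (base_decomp s N u n H4 HN) as D2.
      simpl base in D1.
      rewrite (base_ext s N (udig s N u) (dgx x0) n) in D1, D2 by (intros j Hj; symmetry; apply (Hudig u x n Hx (HPn x Ux Ex) j Hj)).
      rewrite <- Hx in D1. split; auto. }
    assert (Hlen : (2 * Kr + 1) * mu1 <= mun * (7 * INR N ^ 2 * sv * d / B)).
    { rewrite Hmu1. unfold Kr.
      assert (Hr : 2/3 <= (INR N * sv)^2 * d / B).
      { apply (Rmult_le_reg_r (B / (INR N * sv)^2)). apply Rdiv_lt_0_compat; lra.
        replace ((INR N * sv)^2 * d / B * (B / (INR N * sv)^2)) with d by (field; split; lra).
        replace (2/3 * (B / (INR N * sv)^2)) with (2/3 * B / (INR N * sv)^2) by (field; lra). lra. }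
      set (w := (INR N * sv)^2 * d / B) in *.
      assert (Hw : 7 * INR N ^ 2 * sv * d / B = 7 * w / sv) by (unfold w; field; split; lra).
      rewrite Hw.
      assert (HA : (2 * (1 + w) + 1) <= 13/2 * w) by lra.
      apply Rle_trans with (13/2 * w * (mun / mR s N (S n))).
      { apply Rmult_le_compat_r; [apply Rdiv_le_0_compat; lra| lra]. }
      apply Rle_trans with (13/2 * w * (mun / sv)).
      { apply Rmult_le_compat_l; [lra|]. unfold Rdiv. apply Rmult_le_compat_l; [lra|].
        apply Rinv_le_contravar; lra. }
      apply Rle_trans with (7 * w * (mun / sv)); [apply Rmult_le_compat_r; [apply Rdiv_le_0_compat; lra| nra] | right; field; lra]. }
    assert (Hz : 0 < 7 * INR N ^ 2 * sv * d / B).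
    { apply Rdiv_lt_0_compat; [|lra]. assert (0 < d) by lra. assert (0 < INR N ^ 2) by (apply pow_lt; lra). nra. }
    assert (Hkey : mun * Rpower (7 * INR N ^ 2 * sv * d / B) t <= Rpower (7 * INR N ^ 2) t * powt d t).
    { assert (Hpd : powt d t = Rpower d t) by (unfold powt; destruct (Rle_dec d 0); [lra| reflexivity]).
      rewrite Hpd. apply key_bound; auto; try lra.
      - apply (Bd_bounds s N x0 n H4 HN Ex0). }
    assert (HKr0 : 0 <= Kr).
    { unfold Kr. assert (0 <= (INR N * sv)^2 * d / B) by (apply Rdiv_le_0_compat; [apply Rmult_le_pos|]; lra). lra. }
    destruct (Rle_lt_dec ((2 * Kr + 1) * mu1) mun) as [Hc|Hc].
    + exists (bn + (a0 - sv - Kr) * mu1), (bn + (a0 - sv + Kr + 1) * mu1). split.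
      * intros u x Hu Ex Hx Ux. destruct (Hdec2 u x Hu Ex Hx Ux) as [D1 _].
        pose proof (rem_range s N u (S n) H4 HN ltac:(lra)).
        pose proof (HK x Ux Ex). apply Rabs_le_between in H0.
        assert (0 < mu1) by (apply mu_pos; auto). nra.
      * assert ((2 * Kr + 1) * mu1 <= mun * Rpower (7 * INR N ^ 2 * sv * d / B) t).
        { apply min_pow; auto; lra. }
        replace (bn + (a0 - sv + Kr + 1) * mu1 - (bn + (a0 - sv - Kr) * mu1)) with ((2 * Kr + 1) * mu1) by ring.
        lra.
    + exists bn, (bn + mun). split.
      * intros u x Hu Ex Hx Ux. destruct (Hdec2 u x Hu Ex Hx Ux) as [_ D2].
        pose proof (rem_range s N u n H4 HN ltac:(lra)). nra.
      * assert (mun <= mun * Rpower (7 * INR N ^ 2 * sv * d / B) t).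
        { apply min_pow; auto; lra. }
        lra.
Qed.
Lemma geom_half n : sum_f_R0 (fun i => (1/2)^(S i)) n <= 1.
Proof.
  assert (G0 : forall m, sum_f_R0 (fun i => (1/2)^(S i)) m = 1 - (1/2)^(S m)).
  { induction m; [simpl; field|].
    change (sum_f_R0 (fun i => (1/2)^(S i)) (S m)) with (sum_f_R0 (fun i => (1/2)^(S i)) m + (1/2)^(S (S m))).
    rewrite IHm. simpl. field. }
  rewrite G0. assert (0 < (1/2)^(S n)) by (apply pow_lt; lra). lra.
Qed.

Lemma lower_main s N l t : (forall k, (1 <= k)%nat -> (4 <= s k)%nat) -> (2 <= N)%nat ->
  (forall M : nat, exists K : nat, forall n, (K <= n)%nat -> (M <= s n)%nat) ->
  0 < t -> t < l -> l <= 1/2 ->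
  (forall t'', t'' < l -> exists K, forall n, (K <= n)%nat -> t'' < s0_term s (S n)) ->
  hausdorff_measure t (Ein s N) <> Finite 0.
Proof.
  intros H4 HN Hinf Ht Htl Hl Hli.
  set (t2 := (t + l) / 2).
  destruct (Hli t2 ltac:(unfold t2; lra)) as [n1 Hn1].
  pose proof (INR_ge2 N HN) as HN2.
  set (lnN := ln (INR N)). assert (HlnN : 0 < lnN) by (apply ln_pos'; lra).
  assert (Htt : 0 < t2 - t) by (unfold t2; lra).
  destruct (big_ln_nat ((t * lnN + 1) / (t2 - t))) as [B [HB1 HlnB]].
  set (lnB := ln (INR B)) in *.
  assert (HlnB' : t * lnN + 1 <= (t2 - t) * lnB).
  { apply (Rmult_le_compat_l (t2 - t)) in HlnB; [|lra].
    replace ((t2 - t) * ((t * lnN + 1) / (t2 - t))) with (t * lnN + 1) in HlnB by (field; lra). lra. }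
  destruct (Hinf B) as [K HK].
  destruct (big_nat (INR K * (t * lnN + 1))) as [K1 HK1].
  set (n0 := Nat.max (Nat.max (S n1) K) K1).
  assert (Has : forall n, (n0 <= n)%nat ->
     - ln (prod_s s n) + t * ln (INR (s (S n))) + 2 * t * (INR n * ln (INR N) + ln (prod_s s n)) <= 0).
  { intros m Hm. fold lnN.
    assert (Hm1 : (1 <= m)%nat) by (unfold n0 in Hm; lia).
    destruct m as [|n]; [lia|].
    pose proof (s0_term_gt s (S n) t2 H4 Hm1 (Hn1 n ltac:(unfold n0 in Hm; lia))) as Hg.
    assert (HKm : (K <= S n)%nat) by (unfold n0 in Hm; lia).
    pose proof (ln_prod_lower s B K (S n) HB1 HK H4 HKm) as Hp. fold lnB in Hp.
    assert (HK1m : INR K1 <= INR (S n)) by (apply le_INR; unfold n0 in Hm; lia).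
    set (p := ln (prod_s s (S n))) in *. set (sg := ln (INR (s (S (S n))))) in *.
    set (mr := INR (S n)) in *.
    assert (Hp0 : 0 < p) by (apply ln_pos'; pose proof (prod_s_ge4 s (S n) H4 Hm1); lra).
    assert (Hsg : 0 < sg).
    { apply ln_pos'. replace 1 with (INR 1) by reflexivity. apply lt_INR. specialize (H4 (S (S n)) ltac:(lia)). lia. }
    assert (HmK : 0 <= mr - INR K) by (unfold mr; rewrite <- minus_INR by auto; apply pos_INR).
    assert (HlnB0 : 0 <= lnB) by (apply ln_nonneg'; replace 1 with (INR 1) by reflexivity; apply le_INR; auto).
    assert (E1 : 0 <= (t2 - t) * (p - (mr - INR K) * lnB)) by (apply Rmult_le_pos; lra).
    assert (E2 : 0 <= (mr - INR K) * ((t2 - t) * lnB - (t * lnN + 1))) by (apply Rmult_le_pos; lra).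
    assert (E3 : 0 <= (t2 - t) * sg) by (apply Rmult_le_pos; lra).
    pose proof (pos_INR K).
    assert (E4 : 0 <= INR K * (t * lnN)) by (apply Rmult_le_pos; [lra| nra]).
    nra. }
  set (delta := G s N n0 / 3).
  assert (Hdelta : 0 < delta) by (unfold delta; pose proof (G_pos s N n0 H4 HN); lra).
  set (C := Rpower (7 * INR N ^ 2) t).
  assert (HC : 0 < C) by (unfold C, Rpower; apply exp_pos).
  apply (measure_pos t (Ein s N) delta (/ (2 * C))); auto.
  { apply Rinv_0_lt_compat; lra. }
  intros U Hcov Hdiam. apply series_ge. intros Ssum HS.
  assert (Hmain : forall eta, 0 < eta -> 1/2 <= C * Ssum + eta).
  { intros eta Heta.
    assert (Hex : forall i, exists pr : R * R,
       (forall u x, 0 <= u <= 1/2 -> Ein s N x -> (forall k, luroth_a1 (Lit k x) = udig s N u (S k)) ->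
          U i x -> fst pr <= u <= snd pr) /\
       snd pr - fst pr <= C * powt (real (diam (U i))) t + eta * (1/2)^(S i)).
    { intros i. destruct (piece s N t n0 (U i) (eta * (1/2)^(S i)) H4 HN ltac:(lra) Has (Hdiam i)) as [lo [hi [A1 A2]]].
      { apply Rmult_lt_0_compat; [lra| apply pow_lt; lra]. }
      exists (lo, hi). simpl. split; auto. }
    set (F := fun i => proj1_sig (constructive_indefinite_description _ (Hex i))).
    assert (HF : forall i, _) by (intros i; exact (proj2_sig (constructive_indefinite_description _ (Hex i)))).
    apply (cover_len (1/2) (C * Ssum + eta) (fun i => fst (F i)) (fun i => snd (F i))); [lra| |].
    - intros u Hu.
      destruct (realize (udig s N u)) as [x [Hx Hdx]].
      { intros k Hk. destruct (udig_range s N u k H4 HN ltac:(lra) Hk) as [A _]. specialize (H4 k Hk). lia. }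
      assert (Ex : Ein s N x).
      { split; auto. intros n Hn. destruct n as [|k]; [lia|]. rewrite digit_S, Hdx.
        apply udig_range; auto; lra. }
      destruct (Hcov x Ex) as [i Ui]. exists i.
      destruct (HF i) as [P1 _]. apply (P1 u x Hu Ex); auto.
    - intros n.
      apply Rle_trans with (sum_f_R0 (fun i => C * powt (real (diam (U i))) t + eta * (1/2)^(S i)) n).
      + apply sum_Rle. intros i _. destruct (HF i) as [_ P2].
        apply Rmax_lub; [|exact P2].
        apply Rplus_le_le_0_compat; [apply Rmult_le_pos; [lra| apply powt_nonneg]| apply Rmult_le_pos; [lra| left; apply pow_lt; lra]].
      + rewrite sum_plus.
        rewrite (sum_eq _ (fun i => powt (real (diam (U i))) t * C)) by (intros; ring).
        rewrite (sum_eq (fun i => eta * (1/2)^(S i)) (fun i => (1/2)^(S i) * eta)) by (intros; ring).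
        rewrite <- !scal_sum.
        pose proof (HS n). pose proof (geom_half n). nra. }
  assert (1/2 <= C * Ssum).
  { destruct (Rle_lt_dec (1/2) (C * Ssum)) as [H|H]; auto.
    specialize (Hmain ((1/2 - C * Ssum)/2) ltac:(lra)). lra. }
  apply (Rmult_le_reg_l (2 * C)); [lra|]. rewrite Rinv_r by lra. lra.
Qed.
Theorem lemma3p1 (s : nat -> nat)
  (hs4 : forall n, (1 <= n)%nat -> (4 <= s n)%nat)
  (hsinf : forall M : nat, exists K : nat, forall n, (K <= n)%nat -> (M <= s n)%nat)
  (N : nat) (hN : (2 <= N)%nat) :
  hausdorff_dim
    (fun x => 0 < x <= 1 /\
       forall n, (1 <= n)%nat ->
         (s n <= luroth_digit n x)%nat /\ (luroth_digit n x <= N * s n - 1)%nat)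
  = LimInf_seq (fun n => s0_term s (S n)).
Proof.
  change (fun x => 0 < x <= 1 /\
       forall n, (1 <= n)%nat ->
         (s n <= luroth_digit n x)%nat /\ (luroth_digit n x <= N * s n - 1)%nat) with (Ein s N).
  set (u := fun n => s0_term s (S n)).
  assert (Hu : forall n, 0 <= u n <= 1/2) by (intros n; apply s0_term_range; auto; lia).
  destruct (ex_LimInf_seq u) as [li Hli].
  rewrite (is_LimInf_seq_unique _ _ Hli).
  destruct li as [l| |]; simpl in Hli.
  - assert (Hup : forall t', l < t' -> forall K, exists n, (K <= n)%nat /\ s0_term s (S n) < t').
    { intros t' Ht' K. destruct (Hli (mkposreal (t' - l) ltac:(lra))) as [A _]. simpl in A.
      destruct (A K) as [n [Hn Hn']]. exists n. split; auto. unfold u in Hn'. lra. }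
    assert (Hlo : forall t'', t'' < l -> exists K, forall n, (K <= n)%nat -> t'' < s0_term s (S n)).
    { intros t'' Ht''. destruct (Hli (mkposreal (l - t'') ltac:(lra))) as [_ [K HK]]. simpl in HK.
      exists K. intros n Hn. specialize (HK n Hn). unfold u in HK. lra. }
    assert (Hl0 : 0 <= l).
    { destruct (Rle_lt_dec 0 l) as [H|H]; auto. destruct (Hup (l / 2) ltac:(lra) O) as [n [_ Hn]].
      specialize (Hu n). unfold u in Hu. lra. }
    assert (Hl1 : l <= 1/2).
    { destruct (Rle_lt_dec l (1/2)) as [H|H]; auto. destruct (Hlo ((l + 1/2)/2) ltac:(lra)) as [K HK].
      specialize (HK K (le_n K)). specialize (Hu K). unfold u in Hu. lra. }
    apply Rbar_is_glb_unique. split.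
    + intros v [t [Ht [H0 ->]]]. simpl.
      destruct (Rle_lt_dec l t) as [H|H]; auto. exfalso.
      apply (lower_main s N l t hs4 hN hsinf Ht H Hl1 Hlo). exact H0.
    + intros b Hb.
      assert (Hall : forall t, l < t -> Rbar_le b (Finite t)).
      { intros t Ht. apply Hb. exists t. split; [lra|]. split; auto.
        apply (upper_main s N l t hs4 hN hsinf Hl0 Ht Hup). }
      destruct b as [b| |]; simpl; auto.
      * destruct (Rle_lt_dec b l) as [H|H]; auto. specialize (Hall ((b + l)/2) ltac:(lra)). simpl in Hall. lra.
      * specialize (Hall (l + 1) ltac:(lra)). simpl in Hall. auto.
  - exfalso. destruct (Hli 1) as [K HK]. specialize (HK K (le_n K)). specialize (Hu K). lra.
  - exfalso. destruct (Hli (-1) O) as [n [_ Hn]]. specialize (Hu n). lra.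
Qed.
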